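(* Let $t,r\in\mathbb{R}$ with $r>e^{-t}$. For all integers $n\ge\lceil r\rceil$, $$\int_{n+1}^\infty\frac{dx}{24x^2(t+\log x)^2}+\frac{1}{24(n+1)(t+\log(n+1))^2}\le\beta(t,r)-\beta_n(t,r)$$ $$\le\int_n^\infty\frac{dx}{24x^2(t+\log x)^2}+\frac{1}{24(n+\frac12)(t+\log(n+\frac12))^2}+\frac{1}{24n^2(t+\log n)^2}+\frac{1}{12n^2(t+\log n)^3}.$$ Moreover, $\beta(t,r)=\beta_n(t,r)+\frac{1+o(1)}{12n(\log n)^2}$ as $n\to\infty$.
   Context: $\operatorname{li}(x)=\int_0^x\frac{du}{\log u}$ (principal value) is the logarithmic integral, $\gamma$ the Euler–Mascheroni constant, $H_k=\sum_{j=1}^k1/j$. For real $t,r$ with $\lceil r\rceil>e^{-t}$ and real $x\ge r$, define $\beta_x(t,r)=\frac{\operatorname{li}(e^tx)}{e^t}-\sum_{r\le k<x}\frac{1}{H_k-\gamma+t}$ (sum over integers $k$), and $\beta(t,r)=\lim_{n\to\infty}\beta_n(t,r)$ (this limit exists). *)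

(* Defs.v *)
From Stdlib Require Import Reals Lra Lia ZArith Classical ClassicalEpsilon.
Open Scope R_scope.

Definition choose_or0 (P : R -> Prop) : R :=
  match excluded_middle_informative (exists x, P x) with
  | left H => proj1_sig (constructive_indefinite_description _ H)
  | right _ => 0
  end.

Definition lim_seq (u : nat -> R) : R := choose_or0 (fun l => Un_cv u l).

(* Riemann integral of f on [a,b] (oriented), when f is Riemann integrable;
   the value RiemannInt pr is independent of the proof pr. *)
Definition RInt (f : R -> R) (a b : R) : R :=
  choose_or0 (fun L => exists pr : Riemann_integrable f a b, RiemannInt pr = L).

Definition RInt_infty (f : R -> R) (a : R) : R :=
  choose_or0 (fun L => forall eps, eps > 0 ->
     exists M, forall y, y >= M -> Rabs (RInt f a y - L) < eps).

Definition lim_0plus (F : R -> R) : R :=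
  choose_or0 (fun L => forall eps, eps > 0 ->
     exists d, d > 0 /\ forall e, 0 < e < d -> Rabs (F e - L) < eps).

Definition li (x : R) : R :=
  lim_0plus (fun e => RInt (fun u => / ln u) 0 (1 - e) + RInt (fun u => / ln u) (1 + e) x).

Fixpoint H (k : nat) : R :=
  match k with
  | O => 0
  | S k' => H k' + / INR (S k')
  end.

Definition euler_gamma : R := lim_seq (fun n => H n - ln (INR n)).

(* Ceiling: ceil r = 1 - up(-r)  (Stdlib's up x satisfies x < up x <= x + 1). *)
Definition ceilZ (r : R) : Z := (1 - up (- r))%Z.

Fixpoint sumZ (f : Z -> R) (m : Z) (len : nat) : R :=
  match len with
  | O => 0
  | S l => f m + sumZ f (m + 1)%Z l
  end.

(* beta_x(t,r) = li(e^t x)/e^t - sum_{r <= k < x, k integer} 1/(H_k - gamma + t).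
   Integers k with r <= k < x are exactly ceil r <= k <= ceil x - 1. *)
Definition beta_x (t r x : R) : R :=
  li (exp t * x) / exp t
  - sumZ (fun k => / (H (Z.to_nat k) - euler_gamma + t)) (ceilZ r)
         (Z.to_nat (ceilZ x - ceilZ r)).

Definition beta (t r : R) : R := lim_seq (fun n => beta_x t r (INR n)).

(* Main.v *)
Require Import Defs.
From Stdlib Require Import Reals Lra Lia ZArith Classical ClassicalEpsilon.
From Coquelicot Require Import Coquelicot.
Open Scope R_scope.

Ltac pos := repeat (apply Rmult_lt_0_compat || apply Rinv_0_lt_compat || apply pow_lt); try lra.
Ltac sidec := repeat split; try lra; apply Rgt_not_eq; pos.

Lemma mono_le (f df : R -> R) a b : a <= b ->
  (forall x, a <= x <= b -> is_derive f x (df x)) ->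
  (forall x, a <= x <= b -> 0 <= df x) -> f a <= f b.
Proof.
  intros hab hd hp.
  destruct (MVT_gen f a b df) as [c [hc e]].
  - intros x hx. apply hd. rewrite Rmin_left, Rmax_right in hx by lra. lra.
  - intros x hx. rewrite Rmin_left, Rmax_right in hx by lra.
    apply continuity_pt_filterlim. apply (@ex_derive_continuous R_AbsRing R_NormedModule).
    eexists; apply hd; lra.
  - rewrite Rmin_left, Rmax_right in hc by lra.
    assert (0 <= df c * (b - a)) by (apply Rmult_le_pos; [apply hp; lra| lra]). lra.
Qed.

Lemma ln_le_sub1 y : 0 < y -> ln y <= y - 1.
Proof. intros hy. rewrite <- (exp_ln y) at 2 by lra. pose proof (exp_ineq1_le (ln y)). lra. Qed.

Lemma ln_ge_frac y : 0 < y -> ln y >= 1 - / y.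
Proof. intros hy. pose proof (ln_le_sub1 (/ y) ltac:(pos)). rewrite ln_Rinv in H by lra. lra. Qed.

Lemma ell_low x : 0 <= x < 1 -> 2 * x^3 / 3 <= ln (1 + x) - ln (1 - x) - 2 * x.
Proof.
  intros hx.
  set (g := fun s => ln (1 + s) - ln (1 - s) - 2 * s - 2 * s^3 / 3).
  assert (g 0 <= g x).
  { apply (mono_le g (fun s => 2 * s^4 / (1 - s^2))). lra.
    - intros s hs. unfold g. auto_derive. sidec. field. split; nra.
    - intros s hs. apply Rmult_le_pos. apply Rmult_le_pos; try lra. apply pow_le; lra.
      apply Rlt_le, Rinv_0_lt_compat. nra. }
  unfold g in H. rewrite Rplus_0_r, Rminus_0_r, ln_1 in H. lra.
Qed.

Lemma ell_up x : 0 <= x < 1 -> ln (1 + x) - ln (1 - x) - 2 * x <= 2 * x^3 / (3 * (1 - x^2)).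
Proof.
  intros hx.
  set (g := fun s => 2 * s^3 / (3 * (1 - s^2)) - (ln (1 + s) - ln (1 - s) - 2 * s)).
  assert (g 0 <= g x).
  { apply (mono_le g (fun s => 4 * s^4 / (3 * (1 - s^2)^2))). lra.
    - intros s hs. unfold g. auto_derive. sidec; nra. field. split; nra.
    - intros s hs. apply Rmult_le_pos. apply Rmult_le_pos; try lra. apply pow_le; lra.
      apply Rlt_le, Rinv_0_lt_compat. apply Rmult_lt_0_compat. lra. apply pow_lt. nra. }
  unfold g in H. rewrite Rplus_0_r, Rminus_0_r, ln_1 in H. lra.
Qed.
Section Phi.
Variable t : R.
Definition Lam x := t + ln x.
Definition phi0 x := / (t + ln x).
Definition phi1 x := - / (x * (t + ln x)^2).
Definition phi2 x := (t + ln x + 2) / (x^2 * (t + ln x)^3).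
Definition phi3 x := - (2 * (t + ln x)^2 + 6 * (t + ln x) + 6) / (x^3 * (t + ln x)^4).

Lemma d_phi0 x : 0 < x -> 0 < t + ln x -> is_derive phi0 x (phi1 x).
Proof. intros hx hl. unfold phi0, phi1. auto_derive.
  - split; [lra|]. split; [|auto]. lra.
  - field. split; lra.
Qed.
Lemma d_phi1 x : 0 < x -> 0 < t + ln x -> is_derive phi1 x (phi2 x).
Proof. intros hx hl. unfold phi1, phi2. auto_derive.
  - sidec.
  - field. split; lra.
Qed.
Lemma d_phi2 x : 0 < x -> 0 < t + ln x -> is_derive phi2 x (phi3 x).
Proof. intros hx hl. unfold phi2, phi3. auto_derive.
  - sidec.
  - field. split; lra.
Qed.
Definition FF x := / (24 * x ^ 2 * (t + ln x) ^ 2).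
Definition FF1 x := - (t + ln x + 1) / (12 * x^3 * (t + ln x)^3).
Definition fh x := / (24 * x * (t + ln x) ^ 2).
Lemma d_FF x : 0 < x -> 0 < t + ln x -> is_derive FF x (FF1 x).
Proof. intros hx hl. unfold FF, FF1. auto_derive.
  - sidec.
  - field. split; lra.
Qed.
Lemma d_fh x : 0 < x -> 0 < t + ln x -> is_derive fh x (- (FF x + / (12 * x^2 * (t + ln x)^3))).
Proof. intros hx hl. unfold fh, FF. auto_derive.
  - sidec.
  - field. split; lra.
Qed.
End Phi.

Definition ee k := H k - ln (INR k + / 2).
Definition lowb k := / (24 * (INR k + 1) ^ 2).
Definition upb k := / (24 * (INR k + / 2) ^ 2).

Lemma ee_step k : ee k - ee (S k) =
  ln (1 + / (2 * (INR k + 1))) - ln (1 - / (2 * (INR k + 1))) - 2 * / (2 * (INR k + 1)).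
Proof.
  pose proof (pos_INR k) as hk.
  unfold ee. change (H (S k)) with (H k + / INR (S k)). rewrite S_INR.
  replace (1 + / (2 * (INR k + 1))) with ((INR k + 1 + /2) / (INR k + 1)) by (field; lra).
  replace (1 - / (2 * (INR k + 1))) with ((INR k + /2) / (INR k + 1)) by (field; lra).
  rewrite !ln_div by lra.
  assert (2 * / (2 * (INR k + 1)) = / (INR k + 1)) as -> by (field; lra). lra.
Qed.

Lemma ee_step_low k : lowb k - lowb (S k) <= ee k - ee (S k).
Proof.
  rewrite ee_step. pose proof (pos_INR k) as hk.
  set (m := INR k + 1).
  assert (hx : 0 <= / (2 * m) < 1). { unfold m. split. apply Rlt_le; pos. assert (/ (2*(INR k + 1)) <= / 2) by (apply Rinv_le_contravar; lra). lra. }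
  pose proof (ell_low _ hx).
  unfold lowb. rewrite S_INR. fold m.
  assert (2 * (/ (2 * m)) ^ 3 / 3 - (/ (24 * m ^ 2) - / (24 * (m + 1) ^ 2))
     = (3 * m + 2) / (24 * m^3 * (m+1)^2)) by (unfold m; field; lra).
  assert (0 <= (3 * m + 2) / (24 * m^3 * (m+1)^2)) by (unfold m; apply Rlt_le; unfold Rdiv; pos).
  lra.
Qed.

Lemma ee_step_up k : ee k - ee (S k) <= upb k - upb (S k).
Proof.
  rewrite ee_step. pose proof (pos_INR k) as hk.
  set (m := INR k + 1).
  assert (hx : 0 <= / (2 * m) < 1). { unfold m. split. apply Rlt_le; pos. assert (/ (2*(INR k + 1)) <= / 2) by (apply Rinv_le_contravar; lra). lra. }
  pose proof (ell_up _ hx).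
  unfold upb. rewrite S_INR.
  replace (INR k + / 2) with (m - /2) by (unfold m; lra).
  replace (INR k + 1 + / 2) with (m + /2) by (unfold m; lra).
  assert (/ (24 * (m - / 2) ^ 2) - / (24 * (m + / 2) ^ 2) - 2 * (/ (2 * m)) ^ 3 / (3 * (1 - (/ (2 * m)) ^ 2))
     = / (3 * m * (4 * m^2 - 1)^2)) by (unfold m; field; repeat split; nra).
  assert (0 <= / (3 * m * (4 * m^2 - 1)^2)).
  { apply Rlt_le. apply Rinv_0_lt_compat. apply Rmult_lt_0_compat. unfold m; lra. apply pow_lt. unfold m; nra. }
  lra.
Qed.

Lemma choose_or0_eq (P : R -> Prop) L : P L -> (forall x y, P x -> P y -> x = y) -> choose_or0 P = L.
Proof.
  intros hL hu. unfold choose_or0.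
  destruct (excluded_middle_informative (exists x, P x)) as [h|h].
  - destruct (constructive_indefinite_description _ h) as [x hx]. simpl. apply hu; auto.
  - exfalso. apply h. eauto.
Qed.

Lemma lim_seq_eq u l : Un_cv u l -> lim_seq u = l.
Proof. intros h. apply choose_or0_eq; auto. intros x y hx hy. eapply UL_sequence; eauto. Qed.

Lemma Un_cv_close (u v w : nat -> R) l N :
  (forall n, (N <= n)%nat -> Rabs (u n - v n) <= w n) -> Un_cv v l -> Un_cv w 0 -> Un_cv u l.
Proof.
  intros hc hv hw eps he.
  destruct (hv (eps/2) ltac:(lra)) as [N1 h1].
  destruct (hw (eps/2) ltac:(lra)) as [N2 h2].
  exists (max N (max N1 N2)). intros n hn.
  specialize (hc n ltac:(lia)). specialize (h1 n ltac:(lia)). specialize (h2 n ltac:(lia)).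
  unfold R_dist in *. rewrite Rminus_0_r in h2.
  pose proof (Rabs_triang (u n - v n) (v n - l)).
  replace (u n - v n + (v n - l)) with (u n - l) in H by ring.
  pose proof (Rle_abs (w n)). lra.
Qed.

Lemma cv_inv_n1 : Un_cv (fun n => / (INR n + 1)) 0.
Proof.
  intros eps he.
  destruct (archimed (/ eps)) as [h1 _].
  assert (0 <= IZR (up (/ eps))). { pose proof (Rinv_0_lt_compat eps he). lra. }
  exists (Z.to_nat (up (/ eps))). intros n hn. unfold R_dist. rewrite Rminus_0_r.
  apply le_INR in hn. rewrite INR_IZR_INZ, Z2Nat.id in hn by (apply le_IZR; lra).
  pose proof (pos_INR n).
  rewrite Rabs_pos_eq by (apply Rlt_le; pos).
  rewrite <- (Rinv_inv eps). apply Rinv_lt_contravar. pos. lra.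
Qed.

Lemma cv_0_bound (u : nat -> R) C N : (forall n, (N <= n)%nat -> Rabs (u n) <= C * / (INR n + 1)) -> Un_cv u 0.
Proof.
  intros hb eps he.
  destruct (cv_inv_n1 (eps / (Rabs C + 1))) as [N1 h1].
  { apply Rdiv_lt_0_compat; [lra|]. pose proof (Rabs_pos C); lra. }
  exists (max N N1). intros n hn. specialize (h1 n ltac:(lia)). specialize (hb n ltac:(lia)).
  unfold R_dist in *. rewrite !Rminus_0_r in *.
  pose proof (pos_INR n).
  rewrite Rabs_pos_eq in h1 by (apply Rlt_le; pos).
  pose proof (Rabs_pos C). pose proof (Rle_abs C).
  assert (C * / (INR n + 1) <= (Rabs C + 1) * / (INR n + 1)).
  { apply Rmult_le_compat_r. apply Rlt_le; pos. lra. }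
  assert ((Rabs C + 1) * / (INR n + 1) < (Rabs C + 1) * (eps / (Rabs C + 1))).
  { apply Rmult_lt_compat_l; lra. }
  replace ((Rabs C + 1) * (eps / (Rabs C + 1))) with eps in H3 by (field; lra).
  lra.
Qed.

Lemma ee_tel k M : lowb k - lowb (k + M) <= ee k - ee (k + M) <= upb k - upb (k + M).
Proof.
  induction M as [|M IH].
  - rewrite Nat.add_0_r. lra.
  - replace (k + S M)%nat with (S (k + M)) by lia.
    pose proof (ee_step_low (k + M)). pose proof (ee_step_up (k + M)). lra.
Qed.

Lemma lowb_pos k : 0 < lowb k.
Proof. unfold lowb. pose proof (pos_INR k). pos. Qed.
Lemma upb_pos k : 0 < upb k.
Proof. unfold upb. pose proof (pos_INR k). pos. Qed.

Lemma ee_decr : Un_decreasing ee.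
Proof.
  intros n. pose proof (ee_step_low n). unfold lowb in *. rewrite S_INR in H.
  pose proof (pos_INR n).
  assert (/ (24 * (INR n + 1 + 1) ^ 2) <= / (24 * (INR n + 1) ^ 2)).
  { apply Rinv_le_contravar. pos. apply Rmult_le_compat_l. lra. apply pow_incr. lra. }
  lra.
Qed.

Lemma ee_lb : has_lb ee.
Proof.
  exists (- (ee 0 - upb 0)). intros x [i ->]. unfold opp_seq.
  pose proof (ee_tel 0 i). pose proof (upb_pos i). simpl in H. lra.
Qed.

Definition gam0 := proj1_sig (decreasing_cv ee ee_decr ee_lb).
Lemma gam0_cv : Un_cv ee gam0.
Proof. unfold gam0. destruct (decreasing_cv ee ee_decr ee_lb). simpl. auto. Qed.

Lemma cv_shift (u : nat -> R) l k : Un_cv u l -> Un_cv (fun M => u (k + M)%nat) l.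
Proof. intros h eps he. destruct (h eps he) as [N hN]. exists N. intros n hn. apply hN. lia. Qed.

Lemma cv_lowb k : Un_cv (fun M => lowb (k + M)) 0.
Proof.
  apply (cv_0_bound _ 1 0). intros n _. pose proof (pos_INR n). pose proof (pos_INR k).
  rewrite Rabs_pos_eq by (apply Rlt_le, lowb_pos). unfold lowb. rewrite plus_INR.
  rewrite Rmult_1_l. apply Rinv_le_contravar. pos. nra.
Qed.
Lemma cv_upb k : Un_cv (fun M => upb (k + M)) 0.
Proof.
  apply (cv_0_bound _ 1 0). intros n _. pose proof (pos_INR n). pose proof (pos_INR k).
  rewrite Rabs_pos_eq by (apply Rlt_le, upb_pos). unfold upb. rewrite plus_INR.
  rewrite Rmult_1_l. apply Rinv_le_contravar. pos. nra.
Qed.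

Lemma D_bounds k : lowb k <= ee k - gam0 <= upb k.
Proof.
  pose proof (cv_shift _ _ k gam0_cv) as hs.
  assert (h1 : Un_cv (fun M => ee k - ee (k + M)) (ee k - gam0)).
  { apply CV_minus. intros e he; exists 0%nat; intros; unfold R_dist; rewrite Rminus_eq_0, Rabs_R0; lra. auto. }
  split.
  - apply (Rle_cv_lim (Un:=fun M => lowb k - lowb (k + M)) (Vn:=fun M => ee k - ee (k + M))).
    intros M; apply ee_tel. 2: auto.
    assert (hh : Un_cv (fun M => lowb k - lowb (k + M)) (lowb k - 0)).
    { apply CV_minus; [|apply cv_lowb].
      intros e he; exists 0%nat; intros; unfold R_dist; rewrite Rminus_eq_0, Rabs_R0; lra. }
    rewrite Rminus_0_r in hh. exact hh.
  - apply (Rle_cv_lim (Un:=fun M => ee k - ee (k + M)) (Vn:=fun M => upb k - upb (k + M))).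
    intros M; apply ee_tel. auto.
    assert (hh : Un_cv (fun M => upb k - upb (k + M)) (upb k - 0)).
    { apply CV_minus; [|apply cv_upb].
      intros e he; exists 0%nat; intros; unfold R_dist; rewrite Rminus_eq_0, Rabs_R0; lra. }
    rewrite Rminus_0_r in hh. exact hh.
Qed.

Lemma gamma_eq : euler_gamma = gam0.
Proof.
  unfold euler_gamma. apply lim_seq_eq.
  apply (Un_cv_close _ ee (fun n => / (INR n + 1)) _ 1).
  - intros n hn. unfold ee. apply le_INR in hn. simpl in hn.
    replace (H n - ln (INR n) - (H n - ln (INR n + / 2))) with (ln (INR n + /2) - ln (INR n)) by ring.
    assert (0 <= ln (INR n + /2) - ln (INR n)).
    { assert (ln (INR n) < ln (INR n + /2)) by (apply ln_increasing; lra). lra. }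
    rewrite Rabs_pos_eq by auto.
    rewrite <- ln_div by lra.
    pose proof (ln_le_sub1 ((INR n + /2) / INR n) ltac:(apply Rdiv_lt_0_compat; lra)).
    assert ((INR n + / 2) / INR n - 1 = / (2 * INR n)) by (field; lra).
    assert (/ (2 * INR n) <= / (INR n + 1)) by (apply Rinv_le_contravar; lra).
    lra.
  - apply gam0_cv.
  - apply cv_inv_n1.
Qed.

Lemma Hk_bounds k : lowb k <= H k - euler_gamma - ln (INR k + / 2) <= upb k.
Proof. rewrite gamma_eq. pose proof (D_bounds k) as hd. unfold ee in hd. lra. Qed.

Lemma RInt_bridge f a b : a <= b -> (forall x, a <= x <= b -> continuity_pt f x) ->
  Defs.RInt f a b = RInt f a b.
Proof.
  intros hab hc. pose (pr := continuity_implies_RiemannInt hab hc).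
  unfold Defs.RInt. rewrite (RInt_Reals f a b pr).
  apply choose_or0_eq. eauto.
  intros x y [p1 <-] [p2 <-]. apply RiemannInt_P5.
Qed.

Lemma cont_ctoC f x : continuity_pt f x -> continuous f x.
Proof. intros h. apply continuity_pt_filterlim. auto. Qed.
Lemma cont_Ctoc f x : continuous f x -> continuity_pt f x.
Proof. intros h. apply continuity_pt_filterlim. auto. Qed.

Lemma exRInt_cont f a b : a <= b -> (forall x, a <= x <= b -> continuity_pt f x) -> ex_RInt f a b.
Proof.
  intros hab hc. apply (@ex_RInt_continuous R_CompleteNormedModule). intros z hz.
  rewrite Rmin_left, Rmax_right in hz by lra. apply cont_ctoC, hc; lra.
Qed.

Definition invln (u : R) := / ln u.

Lemma invln_cont x : 0 < x -> x <> 1 -> continuity_pt invln x.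
Proof.
  intros hx h1. unfold invln. apply continuity_pt_inv.
  - apply derivable_continuous_pt. exists (/ x). apply derivable_pt_lim_ln. auto.
  - intros e. apply h1. rewrite <- (exp_ln x) by auto. rewrite e. apply exp_0.
Qed.

Lemma ln_nonpos x : x <= 0 -> ln x = 0.
Proof. intros h. unfold ln. destruct (Rlt_dec 0 x); [exfalso; lra|reflexivity]. Qed.

Lemma invln_cont0 : continuity_pt invln 0.
Proof.
  unfold continuity_pt, continue_in, limit1_in, limit_in. intros eps he.
  exists (exp (- / eps)). split. apply exp_pos.
  intros y [_ hy]. simpl in *. unfold R_dist in *.
  unfold invln. rewrite (ln_nonpos 0) by lra.
  rewrite Rinv_0, Rminus_0_r. rewrite Rminus_0_r in hy.
  destruct (Rle_lt_dec y 0) as [hn|hp].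
  - rewrite (ln_nonpos y) by lra.
    rewrite Rinv_0, Rabs_R0. lra.
  - rewrite Rabs_pos_eq in hy by lra.
    assert (ln y < - / eps). { rewrite <- (ln_exp (- / eps)). apply ln_increasing; lra. }
    assert (0 < / eps) by pos.
    rewrite Rabs_left by (apply Rinv_lt_0_compat; lra).
    rewrite <- (Rinv_inv eps).
    replace (- / ln y) with (/ (- ln y)) by (field; lra).
    apply Rinv_lt_contravar. apply Rmult_lt_0_compat; lra. lra.
Qed.

Lemma invln_cont_lo x : 0 <= x < 1 -> continuity_pt invln x.
Proof. intros hx. destruct (Req_dec x 0) as [->|h]. apply invln_cont0. apply invln_cont; lra. Qed.

Lemma exRInt_invln_lo a b : 0 <= a <= b -> b < 1 -> ex_RInt invln a b.
Proof. intros. apply exRInt_cont. lra. intros; apply invln_cont_lo; lra. Qed.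
Lemma exRInt_invln_hi a b : 1 < a <= b -> ex_RInt invln a b.
Proof. intros. apply exRInt_cont. lra. intros; apply invln_cont; lra. Qed.

Lemma invln_sym_bound s : 0 < s <= /2 -> Rabs (invln (1 - s) + invln (1 + s)) <= 2.
Proof.
  intros hs. unfold invln.
  pose proof (ln_le_sub1 (1 - s) ltac:(lra)) as hA.
  pose proof (ln_ge_frac (1 + s) ltac:(lra)) as hB.
  pose proof (ln_ge_frac (1 - s^2) ltac:(nra)) as hC.
  pose proof (ln_le_sub1 (1 - s^2) ltac:(nra)) as hC'.
  replace (1 - s^2) with ((1 - s) * (1 + s)) in hC, hC' by ring.
  rewrite ln_mult in hC, hC' by lra.
  set (A := ln (1 - s)) in *. set (B := ln (1 + s)) in *.
  assert (hB2 : 2 * s / 3 <= B).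
  { assert (1 - / (1 + s) = s / (1 + s)) by (field; lra).
    assert (s / (1 + s) >= 2 * s / 3).
    { assert (s / (1 + s) - 2 * s / 3 = s * (1 - 2 * s) / (3 * (1 + s))) by (field; lra).
      assert (0 <= s * (1 - 2 * s) / (3 * (1 + s))).
      { apply Rmult_le_pos. apply Rmult_le_pos; nra. apply Rlt_le; pos. }
      lra. }
    lra. }
  assert (hC2 : - (4 * s^2 / 3) <= A + B).
  { assert (1 - / ((1 - s) * (1 + s)) = - (s^2 / (1 - s^2))) by (field; nra).
    assert (s^2 / (1 - s^2) <= 4 * s^2 / 3).
    { assert (4 * s^2 / 3 - s^2 / (1 - s^2) = s^2 * (1 - 4 * s^2) / (3 * (1 - s^2))) by (field; nra).
      assert (0 <= s^2 * (1 - 4 * s^2) / (3 * (1 - s^2))).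
      { apply Rmult_le_pos. apply Rmult_le_pos; nra. apply Rlt_le. apply Rinv_0_lt_compat. nra. }
      lra. }
    lra. }
  assert (A < 0) by lra.
  assert (B > 0) by nra.
  replace (/ A + / B) with ((A + B) / (A * B)) by (field; lra).
  assert (A * B < 0) by nra.
  rewrite Rabs_pos_eq.
  - apply (Rmult_le_reg_r (- (A * B))). lra.
    replace ((A + B) / (A * B) * - (A * B)) with (- (A + B)) by (field; lra).
    assert (A * B <= - s * (2 * s / 3)) by nra. nra.
  - unfold Rdiv. replace ((A + B) * / (A * B)) with ((- (A + B)) * (- / (A * B))) by ring.
    assert (/ (A * B) < 0) by (apply Rinv_lt_0_compat; lra). apply Rmult_le_pos; nra.
Qed.

Lemma scal_R (a b : R) : scal a b = a * b.
Proof. reflexivity. Qed.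
Lemma opp_R (a : R) : opp a = - a.
Proof. reflexivity. Qed.
Lemma plus_R (a b : R) : plus a b = a + b.
Proof. reflexivity. Qed.

Lemma eqR (a b : R) : a = b -> a = b.
Proof. auto. Qed.

Definition KK e := RInt invln 0 (1 - e) + RInt invln (1 + e) 2.

Lemma KK_lip e e' : 0 < e <= e' -> e' <= /2 -> Rabs (KK e - KK e') <= 2 * (e' - e).
Proof.
  intros h1 h2. unfold KK.
  rewrite <- (RInt_Chasles invln 0 (1 - e') (1 - e)) by (apply exRInt_invln_lo; lra).
  rewrite <- (RInt_Chasles invln (1 + e) (1 + e') 2) by (apply exRInt_invln_hi; lra).
  change (plus ?a ?b) with (a + b).
  assert (e1 : RInt invln (1 + e) (1 + e') = RInt (fun s => invln (1 + s)) e e').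
  { rewrite <- (Rmult_1_l e) at 1. rewrite <- (Rmult_1_l e') at 1.
    rewrite (Rplus_comm 1 (1 * e)), (Rplus_comm 1 (1 * e')).
    rewrite <- RInt_comp_lin.
    - apply RInt_ext. intros x _. replace (1 * x + 1) with (1 + x) by ring. exact (scal_one (invln (1 + x))).
    - apply exRInt_invln_hi; lra. }
  assert (e2 : RInt invln (1 - e') (1 - e) = RInt (fun s => invln (1 - s)) e e').
  { rewrite <- opp_RInt_swap by (apply ex_RInt_swap; apply exRInt_invln_lo; lra).
    replace (1 - e) with (-1 * e + 1) by ring. replace (1 - e') with (-1 * e' + 1) by ring.
    rewrite <- RInt_comp_lin by (apply ex_RInt_swap; apply exRInt_invln_lo; lra).
    rewrite <- RInt_opp.
    - apply RInt_ext. intros x _. replace (-1 * x + 1) with (1 - x) by ring. rewrite scal_R, opp_R. apply eqR. ring.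
    - apply (ex_RInt_comp_lin invln (-1) 1 e e'). replace (-1 * e + 1) with (1 - e) by ring. replace (-1 * e' + 1) with (1 - e') by ring. apply ex_RInt_swap; apply exRInt_invln_lo; lra. }
  rewrite e1, e2.
  replace (RInt invln 0 (1 - e') + RInt (fun s : R => invln (1 - s)) e e' +
    (RInt (fun s : R => invln (1 + s)) e e' + RInt invln (1 + e') 2) -
    (RInt invln 0 (1 - e') + RInt invln (1 + e') 2))
   with (RInt (fun s : R => invln (1 - s)) e e' + RInt (fun s : R => invln (1 + s)) e e') by ring.
  assert (ex1 : ex_RInt (fun s : R => invln (1 - s)) e e').
  { apply exRInt_cont. lra. intros x hx. apply (continuity_pt_comp (fun s => 1 - s) invln x). reg. apply invln_cont_lo; lra. }
  assert (ex2 : ex_RInt (fun s : R => invln (1 + s)) e e').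
  { apply exRInt_cont. lra. intros x hx. apply (continuity_pt_comp (fun s => 1 + s) invln x). reg. apply invln_cont; lra. }
  pose proof (RInt_plus _ _ _ _ ex1 ex2) as hp. change (plus ?a ?b) with (a + b) in hp. rewrite <- hp.
  rewrite Rmult_comm. apply abs_RInt_le_const. lra.
  apply (ex_RInt_plus _ _ _ _ ex1 ex2).
  intros x hx. apply invln_sym_bound. lra.
Qed.

Lemma KK_lip2 e e' : 0 < e <= /2 -> 0 < e' <= /2 -> Rabs (KK e - KK e') <= 2 * Rmax e e'.
Proof.
  intros h1 h2. destruct (Rle_dec e e').
  - pose proof (KK_lip e e' ltac:(lra) ltac:(lra)). rewrite Rmax_right by lra. lra.
  - pose proof (KK_lip e' e ltac:(lra) ltac:(lra)). rewrite Rmax_left by lra.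
    rewrite Rabs_minus_sym. lra.
Qed.

Lemma KK_lim : exists L, forall eps, eps > 0 -> exists d, d > 0 /\ forall e, 0 < e < d -> Rabs (KK e - L) < eps.
Proof.
  set (s := fun n => KK (/ (INR n + 2))).
  assert (hs : forall n, 0 < / (INR n + 2) <= /2).
  { intros n. pose proof (pos_INR n). split. pos. apply Rinv_le_contravar; lra. }
  assert (hsn : forall n, / (INR n + 2) <= / (INR n + 1)).
  { intros n. pose proof (pos_INR n). apply Rinv_le_contravar; lra. }
  assert (hc : Cauchy_crit s).
  { intros eps he. destruct (cv_inv_n1 (eps / 4) ltac:(lra)) as [N hN].
    exists N. intros n m hn hm. unfold R_dist, s.
    pose proof (KK_lip2 _ _ (hs n) (hs m)).
    specialize (hN n hn) as h1. specialize (hN m hm) as h2. unfold R_dist in h1, h2.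
    rewrite Rminus_0_r in h1, h2. pose proof (pos_INR n). pose proof (pos_INR m).
    rewrite Rabs_pos_eq in h1, h2 by (apply Rlt_le; pos).
    pose proof (hsn n). pose proof (hsn m).
    assert (Rmax (/ (INR n + 2)) (/ (INR m + 2)) < eps / 4).
    { apply Rmax_lub_lt; lra. }
    lra. }
  destruct (Rcomplete.R_complete s hc) as [L hL].
  exists L. intros eps he.
  destruct (hL (eps / 2) ltac:(lra)) as [N1 h1].
  destruct (cv_inv_n1 (eps / 8) ltac:(lra)) as [N2 h2].
  set (N := max N1 N2).
  specialize (h1 N ltac:(lia)). specialize (h2 N ltac:(lia)).
  unfold R_dist in h1, h2. rewrite Rminus_0_r in h2.
  pose proof (pos_INR N). rewrite Rabs_pos_eq in h2 by (apply Rlt_le; pos).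
  pose proof (hs N). pose proof (hsn N).
  exists (/ (INR N + 2)). split. lra.
  intros e he'.
  pose proof (KK_lip2 e (/ (INR N + 2)) ltac:(lra) (hs N)).
  rewrite Rmax_right in H2 by lra.
  unfold s in h1.
  pose proof (Rabs_triang (KK e - KK (/ (INR N + 2))) (KK (/ (INR N + 2)) - L)).
  replace (KK e - KK (/ (INR N + 2)) + (KK (/ (INR N + 2)) - L)) with (KK e - L) in H3 by ring.
  lra.
Qed.

Lemma exRInt_invln_hi2 a b : 1 < a -> 1 < b -> ex_RInt invln a b.
Proof. intros. destruct (Rle_dec a b). apply exRInt_invln_hi; lra. apply ex_RInt_swap, exRInt_invln_hi; lra. Qed.

Lemma lim_0plus_eq F L : (forall eps, eps > 0 -> exists d, d > 0 /\ forall e, 0 < e < d -> Rabs (F e - L) < eps) ->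
  lim_0plus F = L.
Proof.
  intros h. apply choose_or0_eq; auto.
  intros x y hx hy. apply Rminus_diag_uniq. apply Rabs_eq_0.
  apply Rle_antisym; [|apply Rabs_pos].
  apply le_epsilon. intros eps he.
  destruct (hx (eps/2) ltac:(lra)) as [d1 [hd1 h1]].
  destruct (hy (eps/2) ltac:(lra)) as [d2 [hd2 h2]].
  set (e := Rmin d1 d2 / 2).
  assert (0 < e < d1) by (unfold e; pose proof (Rmin_l d1 d2); pose proof (Rmin_r d1 d2); pose proof (Rmin_glb_lt d1 d2 0 hd1 hd2); lra).
  assert (0 < e < d2) by (unfold e; pose proof (Rmin_l d1 d2); pose proof (Rmin_r d1 d2); pose proof (Rmin_glb_lt d1 d2 0 hd1 hd2); lra).
  specialize (h1 e H). specialize (h2 e H0).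
  pose proof (Rabs_triang (x - F e) (F e - y)).
  replace (x - F e + (F e - y)) with (x - y) in H1 by ring.
  rewrite Rabs_minus_sym in h1. lra.
Qed.

Definition LL := proj1_sig (constructive_indefinite_description _ KK_lim).

Lemma li_eq z : 1 < z -> li z = LL + RInt invln 2 z.
Proof.
  intros hz. unfold li. change (fun u => / ln u) with invln. apply lim_0plus_eq.
  intros eps he. unfold LL. destruct (constructive_indefinite_description _ KK_lim) as [L hL]. simpl.
  destruct (hL eps he) as [d [hd h]].
  exists (Rmin d (Rmin (/2) (z - 1))). split.
  { apply Rmin_glb_lt; auto. apply Rmin_glb_lt; lra. }
  intros e he'.
  pose proof (Rmin_l d (Rmin (/2) (z - 1))). pose proof (Rmin_r d (Rmin (/2) (z - 1))).
  pose proof (Rmin_l (/2) (z - 1)). pose proof (Rmin_r (/2) (z - 1)).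
  rewrite RInt_bridge by (lra || (intros; apply invln_cont_lo; lra)).
  rewrite RInt_bridge by (lra || (intros; apply invln_cont; lra)).
  rewrite <- (RInt_Chasles invln (1 + e) 2 z) by (apply exRInt_invln_hi2; lra).
  change (plus ?a ?b) with (a + b).
  replace (RInt invln 0 (1 - e) + (RInt invln (1 + e) 2 + RInt invln 2 z) - (L + RInt invln 2 z))
    with (KK e - L) by (unfold KK; ring).
  apply h. lra.
Qed.

Lemma ball_R x (e : posreal) y : ball x e y -> x - e < y < x + e.
Proof. intros h. change (Rabs (y - x) < e) in h. apply Rabs_def2 in h. lra. Qed.

Section P.
Variable t : R.

Lemma dom_iff x : 0 < x -> (0 < t + ln x <-> exp (- t) < x).
Proof.
  intros hx. split; intros h.
  - rewrite <- (exp_ln x) by lra. apply exp_increasing. lra.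
  - apply ln_increasing in h; [|apply exp_pos]. rewrite ln_exp in h. lra.
Qed.

Lemma dom_pos x : exp (- t) < x -> 0 < x.
Proof. pose proof (exp_pos (- t)). lra. Qed.
Lemma dom_lam x : exp (- t) < x -> 0 < t + ln x.
Proof. intros h. apply dom_iff; auto. apply dom_pos; auto. Qed.

Lemma phi0_cont x : exp (- t) < x -> continuity_pt (phi0 t) x.
Proof.
  intros h. apply cont_Ctoc. apply (@ex_derive_continuous R_AbsRing R_NormedModule).
  eexists. apply d_phi0. apply dom_pos; auto. apply dom_lam; auto.
Qed.

Lemma exRInt_phi0 a b : exp (- t) < a -> exp (- t) < b -> ex_RInt (phi0 t) a b.
Proof.
  intros ha hb. destruct (Rle_dec a b).
  - apply exRInt_cont. lra. intros; apply phi0_cont; lra.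
  - apply ex_RInt_swap. apply exRInt_cont. lra. intros; apply phi0_cont; lra.
Qed.

Definition PP x := li (exp t * x) / exp t.

Lemma PP_diff x y : exp (- t) < x -> exp (- t) < y -> PP y - PP x = RInt (phi0 t) x y.
Proof.
  intros hx hy. pose proof (dom_pos x hx). pose proof (dom_pos y hy).
  assert (he : forall z, exp (- t) < z -> 1 < exp t * z).
  { intros z hz. apply (Rmult_lt_compat_l (exp t)) in hz; [|apply exp_pos].
    rewrite <- exp_plus in hz. replace (t + - t) with 0 in hz by ring. rewrite exp_0 in hz. lra. }
  unfold PP. rewrite !li_eq by auto.
  assert (hA : RInt invln 2 (exp t * y) - RInt invln 2 (exp t * x) = RInt invln (exp t * x) (exp t * y)).
  { rewrite <- (RInt_Chasles invln 2 (exp t * x) (exp t * y)) by (apply exRInt_invln_hi2; try lra; auto).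
    change (plus ?a ?b) with (a + b). ring. }
  assert (hB : RInt invln (exp t * x) (exp t * y) = exp t * RInt (phi0 t) x y).
  { replace (exp t * x) with (exp t * x + 0) by ring. replace (exp t * y) with (exp t * y + 0) by ring.
    rewrite <- RInt_comp_lin by (apply exRInt_invln_hi2; rewrite Rplus_0_r; auto).
    change (exp t * RInt (phi0 t) x y) with (scal (exp t) (RInt (phi0 t) x y)).
    rewrite <- RInt_scal by (apply exRInt_phi0; auto).
    apply RInt_ext. intros z hz.
    assert (hzz : exp (- t) < z).
    { destruct (Rle_dec x y). rewrite Rmin_left in hz by lra. lra. rewrite Rmin_right in hz by lra. lra. }
    pose proof (dom_pos z hzz).
    rewrite !scal_R. unfold invln, phi0. rewrite Rplus_0_r, ln_mult, ln_exp by (auto; apply exp_pos). reflexivity. }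
  pose proof (exp_pos t).
  rewrite <- hA in hB.
  apply (Rmult_eq_reg_l (exp t)); [|lra]. rewrite <- hB. field. lra.
Qed.

Lemma PP_deriv y : exp (- t) < y -> is_derive PP y (phi0 t y).
Proof.
  intros hy.
  assert (hd : 0 < y - exp (- t)) by lra.
  set (eps := mkposreal _ hd).
  apply (is_derive_ext_loc (fun z => PP y + RInt (phi0 t) y z)).
  - exists eps. intros z hz. apply ball_R in hz. simpl in hz.
    rewrite <- PP_diff by lra. apply eqR. ring.
  - assert (hh : is_derive (fun z => plus (PP y) (RInt (phi0 t) y z)) y (plus zero (phi0 t y))).
    2:{ rewrite plus_zero_l in hh. exact hh. }
    apply (@is_derive_plus R_AbsRing R_NormedModule (fun _ => PP y) (fun z => RInt (phi0 t) y z) y zero (phi0 t y)). apply is_derive_const.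
    apply (is_derive_RInt (phi0 t) (fun z => RInt (phi0 t) y z) y y).
    + exists eps. intros z hz. apply ball_R in hz. simpl in hz.
      apply (@RInt_correct R_CompleteNormedModule). apply exRInt_phi0; lra.
    + apply cont_ctoC. apply phi0_cont. auto.
Qed.

End P.


Lemma d_sp (f : R -> R) m s l : is_derive f (m + s) l -> is_derive (fun s : R => f (m + s)) s l.
Proof.
  intros h. assert (hh := is_derive_comp f (fun s => m + s) s l 1 h).
  assert (is_derive (fun s => m + s) s 1). { auto_derive; auto. }
  specialize (hh H). replace l with (scal 1 l) by (change (scal 1 l) with (1 * l); apply eqR; ring). exact hh.
Qed.
Lemma d_sm (f : R -> R) m s l : is_derive f (m - s) l -> is_derive (fun s : R => f (m - s)) s (- l).
Proof.
  intros h. assert (hh := is_derive_comp f (fun s => m - s) s l (-1) h).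
  assert (is_derive (fun s => m - s) s (-1)). { auto_derive; auto. }
  specialize (hh H). replace (- l) with (scal (-1) l) by (change (scal (-1) l) with (-1 * l); apply eqR; ring). exact hh.
Qed.

Lemma mvt_bounds (f df : R -> R) a b c C : a <= b ->
  (forall x, a <= x <= b -> is_derive f x (df x) /\ c <= df x <= C) ->
  c * (b - a) <= f b - f a <= C * (b - a).
Proof.
  intros hab h. split.
  - assert ((fun x => f x - c * x) a <= (fun x => f x - c * x) b).
    { apply (mono_le (fun x => f x - c * x) (fun x => df x - c)). auto.
      - intros x hx. destruct (h x hx) as [hd _]. auto_derive. eexists; eauto.
        rewrite (is_derive_unique (fun y : R => f y) x (df x) hd). ring.
      - intros x hx. destruct (h x hx) as [_ hd]. lra. }
    simpl in H. lra.
  - assert ((fun x => C * x - f x) a <= (fun x => C * x - f x) b).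
    { apply (mono_le (fun x => C * x - f x) (fun x => C - df x)). auto.
      - intros x hx. destruct (h x hx) as [hd _]. auto_derive. eexists; eauto.
        rewrite (is_derive_unique (fun y : R => f y) x (df x) hd). ring.
      - intros x hx. destruct (h x hx) as [_ hd]. lra. }
    simpl in H. lra.
Qed.

Lemma mid_taylor_low (P p0 p1 p2 : R -> R) m c :
  (forall x, m - /2 <= x <= m + /2 -> is_derive P x (p0 x) /\ is_derive p0 x (p1 x) /\
     is_derive p1 x (p2 x) /\ c <= p2 x) ->
  c / 24 <= P (m + /2) - P (m - /2) - p0 m.
Proof.
  intros h.
  assert (hJ : forall s, 0 <= s <= /2 -> 0 <= p1 (m + s) - p1 (m - s) - 2 * c * s).
  { intros s hs.
    assert ((fun s => p1 (m + s) - p1 (m - s) - 2 * c * s) 0 <= (fun s => p1 (m + s) - p1 (m - s) - 2 * c * s) s).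
    { apply (mono_le (fun s => p1 (m + s) - p1 (m - s) - 2 * c * s) (fun s => p2 (m + s) + p2 (m - s) - 2 * c)). lra.
      - intros x hx.
        destruct (h (m + x) ltac:(lra)) as [_ [_ [d1 _]]].
        destruct (h (m + - x) ltac:(lra)) as [_ [_ [d2 _]]].
        auto_derive. split; [eexists; eauto|split; [eexists; eauto|auto]].
        rewrite (is_derive_unique (fun y : R => p1 y) _ _ d1), (is_derive_unique (fun y : R => p1 y) _ _ d2).
        replace (m + - x) with (m - x) by ring. ring.
      - intros x hx.
        destruct (h (m + x) ltac:(lra)) as [_ [_ [_ c1]]].
        destruct (h (m - x) ltac:(lra)) as [_ [_ [_ c2]]]. lra. }
    simpl in H. rewrite Rplus_0_r, Rminus_0_r in H. lra. }
  assert (hG : forall s, 0 <= s <= /2 -> 0 <= p0 (m + s) + p0 (m - s) - 2 * p0 m - c * s^2).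
  { intros s hs.
    assert ((fun s => p0 (m + s) + p0 (m - s) - 2 * p0 m - c * s^2) 0 <= (fun s => p0 (m + s) + p0 (m - s) - 2 * p0 m - c * s^2) s).
    { apply (mono_le (fun s => p0 (m + s) + p0 (m - s) - 2 * p0 m - c * s^2) (fun s => p1 (m + s) - p1 (m - s) - 2 * c * s)). lra.
      - intros x hx.
        destruct (h (m + x) ltac:(lra)) as [_ [d1 _]].
        destruct (h (m + - x) ltac:(lra)) as [_ [d2 _]].
        auto_derive. split; [eexists; eauto|split; [eexists; eauto|auto]].
        rewrite (is_derive_unique (fun y : R => p0 y) _ _ d1), (is_derive_unique (fun y : R => p0 y) _ _ d2).
        replace (m + - x) with (m - x) by ring. ring.
      - intros x hx. apply hJ. lra. }
    simpl in H. rewrite Rplus_0_r, Rminus_0_r in H. lra. }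
  assert ((fun s => P (m + s) - P (m - s) - 2 * s * p0 m - c * s^3 / 3) 0 <= (fun s => P (m + s) - P (m - s) - 2 * s * p0 m - c * s^3 / 3) (/2)).
  { apply (mono_le (fun s => P (m + s) - P (m - s) - 2 * s * p0 m - c * s^3 / 3) (fun s => p0 (m + s) + p0 (m - s) - 2 * p0 m - c * s^2)). lra.
    - intros x hx.
      destruct (h (m + x) ltac:(lra)) as [d1 _].
      destruct (h (m + - x) ltac:(lra)) as [d2 _].
      auto_derive. split; [eexists; eauto|split; [eexists; eauto|auto]].
      rewrite (is_derive_unique (fun y : R => P y) _ _ d1), (is_derive_unique (fun y : R => P y) _ _ d2).
      replace (m + - x) with (m - x) by ring. field.
    - intros x hx. apply hG. lra. }
  simpl in H. rewrite Rplus_0_r, Rminus_0_r in H. lra.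
Qed.

Lemma is_derive_opp_R (f : R -> R) x l : is_derive f x l -> is_derive (fun y => - f y) x (- l).
Proof. intros h. auto_derive. eexists; eauto. rewrite (is_derive_unique (fun y : R => f y) _ _ h). ring. Qed.

Lemma mid_taylor_up (P p0 p1 p2 : R -> R) m C :
  (forall x, m - /2 <= x <= m + /2 -> is_derive P x (p0 x) /\ is_derive p0 x (p1 x) /\
     is_derive p1 x (p2 x) /\ p2 x <= C) ->
  P (m + /2) - P (m - /2) - p0 m <= C / 24.
Proof.
  intros h.
  pose proof (mid_taylor_low (fun x => - P x) (fun x => - p0 x) (fun x => - p1 x) (fun x => - p2 x) m (- C)).
  cbv beta in H.
  assert (- C / 24 <= - P (m + / 2) - - P (m - / 2) - - p0 m).
  { apply H. intros x hx. destruct (h x hx) as [a [b [c d]]].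
    split; [|split; [|split]]; try (apply is_derive_opp_R; auto). lra. }
  lra.
Qed.

Lemma convex_mid (Psi psi psi1 : R -> R) m :
  (forall x, m - /2 <= x <= m + /2 -> is_derive Psi x (psi x) /\ is_derive psi x (psi1 x)) ->
  (forall x y, m - /2 <= x -> x <= y -> y <= m + /2 -> psi1 x <= psi1 y) ->
  psi m <= Psi (m + /2) - Psi (m - /2).
Proof.
  intros h hm.
  assert (hJ : forall s, 0 <= s <= /2 -> 0 <= psi (m + s) + psi (m - s) - 2 * psi m).
  { intros s hs.
    assert ((fun s => psi (m + s) + psi (m - s) - 2 * psi m) 0 <= (fun s => psi (m + s) + psi (m - s) - 2 * psi m) s).
    { apply (mono_le (fun s => psi (m + s) + psi (m - s) - 2 * psi m) (fun s => psi1 (m + s) - psi1 (m - s))). lra.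
      - intros x hx.
        destruct (h (m + x) ltac:(lra)) as [_ d1].
        destruct (h (m + - x) ltac:(lra)) as [_ d2].
        auto_derive. split; [eexists; eauto|split; [eexists; eauto|auto]].
        rewrite (is_derive_unique (fun y : R => psi y) _ _ d1), (is_derive_unique (fun y : R => psi y) _ _ d2).
        replace (m + - x) with (m - x) by ring. ring.
      - intros x hx. pose proof (hm (m - x) (m + x) ltac:(lra) ltac:(lra) ltac:(lra)). lra. }
    simpl in H. rewrite Rplus_0_r, Rminus_0_r in H. lra. }
  assert ((fun s => Psi (m + s) - Psi (m - s) - 2 * s * psi m) 0 <= (fun s => Psi (m + s) - Psi (m - s) - 2 * s * psi m) (/2)).
  { apply (mono_le (fun s => Psi (m + s) - Psi (m - s) - 2 * s * psi m) (fun s => psi (m + s) + psi (m - s) - 2 * psi m)). lra.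
    - intros x hx.
      destruct (h (m + x) ltac:(lra)) as [d1 _].
      destruct (h (m + - x) ltac:(lra)) as [d2 _].
      auto_derive. split; [eexists; eauto|split; [eexists; eauto|auto]].
      rewrite (is_derive_unique (fun y : R => Psi y) _ _ d1), (is_derive_unique (fun y : R => Psi y) _ _ d2).
      replace (m + - x) with (m - x) by ring. ring.
    - intros x hx. apply hJ. lra. }
  simpl in H. rewrite Rplus_0_r, Rminus_0_r in H. lra.
Qed.

Section E.
Variable t : R.

Lemma FF_cont x : exp (- t) < x -> continuity_pt (FF t) x.
Proof.
  intros h. apply cont_Ctoc. apply (@ex_derive_continuous R_AbsRing R_NormedModule).
  eexists. apply d_FF. apply dom_pos with t; auto. apply dom_lam; auto.
Qed.

Lemma exRInt_FF a b : exp (- t) < a -> exp (- t) < b -> ex_RInt (FF t) a b.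
Proof.
  intros ha hb. destruct (Rle_dec a b).
  - apply exRInt_cont. lra. intros; apply FF_cont; lra.
  - apply ex_RInt_swap. apply exRInt_cont. lra. intros; apply FF_cont; lra.
Qed.

Lemma FF_pos x : exp (- t) < x -> 0 < FF t x.
Proof. intros h. pose proof (dom_pos t x h). pose proof (dom_lam t x h). unfold FF. pos. Qed.

Definition GG x := FF t x + / (12 * x^2 * (t + ln x)^3).

Lemma GG_cont x : exp (- t) < x -> continuity_pt GG x.
Proof.
  intros h. pose proof (dom_pos t x h). pose proof (dom_lam t x h).
  unfold GG. apply continuity_pt_plus. apply FF_cont; auto.
  apply cont_Ctoc. apply (@ex_derive_continuous R_AbsRing R_NormedModule).
  auto_derive. repeat split; try lra. apply Rgt_not_eq. pos.
Qed.

Lemma RInt_GG a b : exp (- t) < a -> a <= b -> RInt GG a b = fh t a - fh t b.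
Proof.
  intros ha hab.
  assert (h := is_RInt_derive (fun x => - fh t x) GG a b).
  rewrite Rmin_left, Rmax_right in h by lra.
  apply is_RInt_unique.
  assert (E : minus (- fh t b) (- fh t a) = fh t a - fh t b).
  { unfold minus. change (plus ?x ?y) with (x + y). change (opp ?x) with (- x). apply eqR. ring. }
  rewrite <- E. apply h.
  - intros x hx. assert (exp (- t) < x) by lra.
    pose proof (d_fh t x (dom_pos t x H) (dom_lam t x H)).
    unfold GG. replace (FF t x + / (12 * x ^ 2 * (t + ln x) ^ 3)) with (- - (FF t x + / (12 * x ^ 2 * (t + ln x) ^ 3))) by ring.
    apply is_derive_opp_R. auto.
  - intros x hx. apply cont_ctoC. apply GG_cont. lra.
Qed.

Lemma exRInt_GG a b : exp (- t) < a -> a <= b -> ex_RInt GG a b.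
Proof. intros. apply exRInt_cont. lra. intros; apply GG_cont; lra. Qed.

Lemma ln_mono x y : 0 < x -> x <= y -> ln x <= ln y.
Proof. intros hx hxy. destruct (Req_dec x y) as [->|h]. lra. apply Rlt_le, ln_increasing; lra. Qed.

Lemma I_up a y : exp (- t) < a -> a <= y -> RInt (FF t) a y <= fh t a - fh t y.
Proof.
  intros ha hy. rewrite <- RInt_GG by auto.
  apply RInt_le. auto. apply exRInt_FF; lra. apply exRInt_GG; auto.
  intros x hx. assert (exp (- t) < x) by lra.
  pose proof (dom_pos t x H). pose proof (dom_lam t x H).
  unfold GG. assert (0 < / (12 * x ^ 2 * (t + ln x) ^ 3)) by pos. lra.
Qed.

Lemma I_low a y : exp (- t) < a -> a <= y ->
  (t + ln a) / (t + ln a + 2) * (fh t a - fh t y) <= RInt (FF t) a y.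
Proof.
  intros ha hy. rewrite <- RInt_GG by auto.
  pose proof (dom_pos t a ha) as hpa. pose proof (dom_lam t a ha) as hla.
  change ((t + ln a) / (t + ln a + 2) * RInt GG a y) with (scal ((t + ln a) / (t + ln a + 2)) (RInt GG a y)).
  rewrite <- RInt_scal by (apply exRInt_GG; auto).
  apply RInt_le. auto.
  apply (@ex_RInt_scal R_NormedModule). apply exRInt_GG; auto.
  apply exRInt_FF; lra.
  intros x hx. assert (exp (- t) < x) by lra.
  pose proof (dom_pos t x H). pose proof (dom_lam t x H).
  assert (ln a <= ln x) by (apply ln_mono; lra).
  rewrite scal_R. unfold GG, FF.
  set (La := t + ln a) in *. set (Lx := t + ln x) in *.
  assert (FFe : / (24 * x ^ 2 * Lx ^ 2) - La / (La + 2) * (/ (24 * x ^ 2 * Lx ^ 2) + / (12 * x ^ 2 * Lx ^ 3))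
     = 2 * (Lx - La) / (24 * x^2 * Lx^3 * (La + 2))).
  { field. repeat split; intro; lra. }
  assert (0 <= 2 * (Lx - La) / (24 * x^2 * Lx^3 * (La + 2))).
  { assert (La <= Lx) by (unfold La, Lx; lra). apply Rmult_le_pos. lra. apply Rlt_le. pos. }
  lra.
Qed.

Lemma I_mono a y1 y2 : exp (- t) < a -> a <= y1 <= y2 -> RInt (FF t) a y1 <= RInt (FF t) a y2.
Proof.
  intros ha hy.
  rewrite <- (RInt_Chasles (FF t) a y1 y2) by (apply exRInt_FF; lra).
  change (plus ?x ?y) with (x + y).
  assert (0 <= RInt (FF t) y1 y2).
  { apply RInt_ge_0. lra. apply exRInt_FF; lra. intros x hx. apply Rlt_le, FF_pos. lra. }
  lra.
Qed.

Lemma fh_pos x : exp (- t) < x -> 0 < fh t x.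
Proof. intros h. pose proof (dom_pos t x h). pose proof (dom_lam t x h). unfold fh. pos. Qed.

Lemma fh_small a y : exp (- t) < a -> a <= y -> fh t y <= / (24 * y * (t + ln a)^2).
Proof.
  intros ha hy. pose proof (dom_pos t a ha). pose proof (dom_lam t a ha).
  assert (ln a <= ln y) by (apply ln_mono; lra).
  unfold fh. apply Rinv_le_contravar. pos. apply Rmult_le_compat_l. lra.
  apply pow_incr. lra.
Qed.

Lemma infty_uniq (f : R -> R) a L1 L2 :
  (forall eps, eps > 0 -> exists M, forall y, y >= M -> Rabs (Defs.RInt f a y - L1) < eps) ->
  (forall eps, eps > 0 -> exists M, forall y, y >= M -> Rabs (Defs.RInt f a y - L2) < eps) ->
  L1 = L2.
Proof.
  intros h1 h2. apply Rminus_diag_uniq. apply Rabs_eq_0.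
  apply Rle_antisym; [|apply Rabs_pos].
  apply le_epsilon. intros eps he.
  destruct (h1 (eps/2) ltac:(lra)) as [M1 g1].
  destruct (h2 (eps/2) ltac:(lra)) as [M2 g2].
  specialize (g1 (Rmax M1 M2) (Rle_ge _ _ (Rmax_l _ _))).
  specialize (g2 (Rmax M1 M2) (Rle_ge _ _ (Rmax_r _ _))).
  pose proof (Rabs_triang (L1 - Defs.RInt f a (Rmax M1 M2)) (Defs.RInt f a (Rmax M1 M2) - L2)).
  replace (L1 - Defs.RInt f a (Rmax M1 M2) + (Defs.RInt f a (Rmax M1 M2) - L2)) with (L1 - L2) in H by ring.
  rewrite Rabs_minus_sym in g1. lra.
Qed.

Lemma infty_limit a : exp (- t) < a -> exists L,
  (forall y, a <= y -> RInt (FF t) a y <= L) /\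
  (forall eps, eps > 0 -> exists M, a <= M /\ forall y, y >= M -> L - eps < RInt (FF t) a y) /\
  RInt_infty (FF t) a = L.
Proof.
  intros ha.
  set (E := fun v => exists y, a <= y /\ v = RInt (FF t) a y).
  assert (hb : bound E).
  { exists (fh t a). intros v [y [hy ->]]. pose proof (I_up a y ha hy). pose proof (fh_pos y ltac:(lra)). lra. }
  assert (hne : exists v, E v) by (exists (RInt (FF t) a a); exists a; split; [lra|auto]).
  destruct (completeness E hb hne) as [L [hub hlub]].
  assert (h1 : forall y, a <= y -> RInt (FF t) a y <= L) by (intros y hy; apply hub; exists y; auto).
  assert (h2 : forall eps, eps > 0 -> exists M, a <= M /\ forall y, y >= M -> L - eps < RInt (FF t) a y).
  { intros eps he.
    destruct (classic (exists y, a <= y /\ L - eps < RInt (FF t) a y)) as [[y0 [hy0 hv]]|hn].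
    - exists y0. split; auto. intros y hy. pose proof (I_mono a y0 y ha ltac:(lra)). lra.
    - exfalso. assert (L <= L - eps). { apply hlub. intros v [y [hy ->]].
        destruct (Rle_dec (RInt (FF t) a y) (L - eps)); auto. exfalso. apply hn. exists y. split; auto. lra. }
      lra. }
  exists L. split; auto. split; auto.
  unfold RInt_infty. apply choose_or0_eq.
  - intros eps he. destruct (h2 eps he) as [M [hM hh]]. exists M. intros y hy.
    rewrite RInt_bridge by (lra || (intros; apply FF_cont; lra)).
    specialize (hh y hy). specialize (h1 y ltac:(lra)).
    rewrite Rabs_minus_sym, Rabs_pos_eq; lra.
  - intros x y hx hy. eapply infty_uniq; eauto.
Qed.
End E.

Lemma inv_mono c x y Lx Ly (a b : nat) : 0 < c -> 0 < x <= y -> 0 < Lx <= Ly ->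
  / (c * y ^ a * Ly ^ b) <= / (c * x ^ a * Lx ^ b).
Proof.
  intros hc hx hL. apply Rinv_le_contravar. pos.
  apply Rmult_le_compat. apply Rlt_le; pos. apply Rlt_le; pos.
  apply Rmult_le_compat_l. lra. apply pow_incr. lra. apply pow_incr. lra.
Qed.

Section F.
Variable t : R.

Lemma lam_mono x y : exp (- t) < x -> x <= y -> 0 < t + ln x <= t + ln y.
Proof. intros hx hy. pose proof (dom_lam t x hx). pose proof (dom_pos t x hx).
  pose proof (ln_mono x y ltac:(lra) hy). lra. Qed.

Lemma phi2_dec x y : exp (- t) < x -> x <= y -> phi2 t y <= phi2 t x.
Proof.
  intros hx hy. pose proof (lam_mono x y hx hy). pose proof (dom_pos t x hx).
  unfold phi2.
  replace ((t + ln y + 2) / (y ^ 2 * (t + ln y) ^ 3)) with (/ (1 * y^2 * (t + ln y)^2) + 2 * / (1 * y^2 * (t + ln y)^3)) by (field; lra).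
  replace ((t + ln x + 2) / (x ^ 2 * (t + ln x) ^ 3)) with (/ (1 * x^2 * (t + ln x)^2) + 2 * / (1 * x^2 * (t + ln x)^3)) by (field; lra).
  pose proof (inv_mono 1 x y (t + ln x) (t + ln y) 2 2 ltac:(lra) ltac:(lra) ltac:(lra)).
  pose proof (inv_mono 1 x y (t + ln x) (t + ln y) 2 3 ltac:(lra) ltac:(lra) ltac:(lra)).
  lra.
Qed.

Lemma phi3_inc x y : exp (- t) < x -> x <= y -> phi3 t x <= phi3 t y.
Proof.
  intros hx hy. pose proof (lam_mono x y hx hy). pose proof (dom_pos t x hx).
  unfold phi3.
  replace (- (2 * (t + ln y) ^ 2 + 6 * (t + ln y) + 6) / (y ^ 3 * (t + ln y) ^ 4)) with
    (- (2 * / (1 * y^3 * (t + ln y)^2) + 6 * / (1 * y^3 * (t + ln y)^3) + 6 * / (1 * y^3 * (t + ln y)^4))) by (field; lra).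
  replace (- (2 * (t + ln x) ^ 2 + 6 * (t + ln x) + 6) / (x ^ 3 * (t + ln x) ^ 4)) with
    (- (2 * / (1 * x^3 * (t + ln x)^2) + 6 * / (1 * x^3 * (t + ln x)^3) + 6 * / (1 * x^3 * (t + ln x)^4))) by (field; lra).
  pose proof (inv_mono 1 x y (t + ln x) (t + ln y) 3 2 ltac:(lra) ltac:(lra) ltac:(lra)).
  pose proof (inv_mono 1 x y (t + ln x) (t + ln y) 3 3 ltac:(lra) ltac:(lra) ltac:(lra)).
  pose proof (inv_mono 1 x y (t + ln x) (t + ln y) 3 4 ltac:(lra) ltac:(lra) ltac:(lra)).
  lra.
Qed.

Lemma FF_dec x y : exp (- t) < x -> x <= y -> FF t y <= FF t x.
Proof.
  intros hx hy. pose proof (lam_mono x y hx hy). pose proof (dom_pos t x hx).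
  unfold FF. apply (inv_mono 24 x y (t + ln x) (t + ln y) 2 2); lra.
Qed.

Lemma FF1_inc x y : exp (- t) < x -> x <= y -> FF1 t x <= FF1 t y.
Proof.
  intros hx hy. pose proof (lam_mono x y hx hy). pose proof (dom_pos t x hx).
  unfold FF1.
  replace (- (t + ln y + 1) / (12 * y ^ 3 * (t + ln y) ^ 3)) with
    (- (/ (12 * y^3 * (t + ln y)^2) + / (12 * y^3 * (t + ln y)^3))) by (field; lra).
  replace (- (t + ln x + 1) / (12 * x ^ 3 * (t + ln x) ^ 3)) with
    (- (/ (12 * x^3 * (t + ln x)^2) + / (12 * x^3 * (t + ln x)^3))) by (field; lra).
  pose proof (inv_mono 12 x y (t + ln x) (t + ln y) 3 2 ltac:(lra) ltac:(lra) ltac:(lra)).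
  pose proof (inv_mono 12 x y (t + ln x) (t + ln y) 3 3 ltac:(lra) ltac:(lra) ltac:(lra)).
  lra.
Qed.


Lemma mid_bounds a : exp (- t) < a ->
  phi2 t (a + 1) / 24 <= PP t (a + 1) - PP t a - phi0 t (a + /2) <= phi2 t a / 24.
Proof.
  intros ha.
  assert (hd : forall x, a <= x <= a + 1 -> is_derive (PP t) x (phi0 t x) /\ is_derive (phi0 t) x (phi1 t x) /\
     is_derive (phi1 t) x (phi2 t x)).
  { intros x hx. assert (h : exp (- t) < x) by lra.
    pose proof (dom_pos t x h). pose proof (dom_lam t x h).
    split. apply PP_deriv; auto. split. apply d_phi0; auto. apply d_phi1; auto. }
  assert (e1 : a + /2 + /2 = a + 1) by field. assert (e2 : a + /2 - /2 = a) by field.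
  split.
  - pose proof (mid_taylor_low (PP t) (phi0 t) (phi1 t) (phi2 t) (a + /2) (phi2 t (a + 1))) as hm.
    rewrite e1, e2 in hm. apply hm.
    intros x hx. destruct (hd x ltac:(lra)) as [h1 [h2 h3]].
    split; [|split; [|split]]; auto. apply phi2_dec; lra.
  - pose proof (mid_taylor_up (PP t) (phi0 t) (phi1 t) (phi2 t) (a + /2) (phi2 t a)) as hm.
    rewrite e1, e2 in hm. apply hm.
    intros x hx. destruct (hd x ltac:(lra)) as [h1 [h2 h3]].
    split; [|split; [|split]]; auto. apply phi2_dec; lra.
Qed.

Lemma second_bounds k : exp (- t) < INR k ->
  FF t (INR k + 1) <= phi0 t (INR k + /2) - / (H k - euler_gamma + t) <= FF t (INR k + /2).
Proof.
  intros hk. pose proof (pos_INR k) as hk0.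
  pose proof (Hk_bounds k) as [hl hu].
  assert (ha : exp (- t) < INR k + /2) by lra.
  pose proof (dom_lam t _ ha) as hA. pose proof (dom_pos t _ ha) as hpos.
  set (A := t + ln (INR k + /2)) in *.
  set (D := H k - euler_gamma - ln (INR k + / 2)) in *.
  replace (H k - euler_gamma + t) with (A + D) by (unfold A, D; ring).
  pose proof (lowb_pos k) as hlp. pose proof (upb_pos k) as hup.
  unfold phi0. fold A.
  replace (/ A - / (A + D)) with (D / (A * (A + D))) by (field; lra).
  split.
  - assert (h1 : ln (INR k + 1) - ln (INR k + /2) >= / (2 * (INR k + 1))).
    { rewrite <- ln_div by lra. pose proof (ln_ge_frac ((INR k + 1) / (INR k + / 2)) ltac:(apply Rdiv_lt_0_compat; lra)) as H0.
      replace (1 - / ((INR k + 1) / (INR k + / 2))) with (/ (2 * (INR k + 1))) in H0 by (field; lra). auto. }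
    assert (h2 : upb k <= / (2 * (INR k + 1))).
    { unfold upb. apply Rinv_le_contravar. lra. nra. }
    set (L1 := t + ln (INR k + 1)).
    assert (A + D <= L1) by (unfold L1, A; lra).
    assert (A <= L1) by lra.
    unfold FF. fold L1.
    assert (lowb k / (L1 * L1) <= D / (A * (A + D))).
    { apply Rmult_le_compat. apply Rlt_le; auto. apply Rlt_le; apply Rinv_0_lt_compat; nra. auto.
      apply Rinv_le_contravar. nra. apply Rmult_le_compat; lra. }
    replace (/ (24 * (INR k + 1) ^ 2 * L1 ^ 2)) with (lowb k / (L1 * L1)) by (unfold lowb; field; split; lra).
    auto.
  - unfold FF. fold A.
    assert (D / (A * (A + D)) <= upb k / (A * A)).
    { apply Rmult_le_compat. lra. apply Rlt_le; apply Rinv_0_lt_compat; nra. auto.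
      apply Rinv_le_contravar. nra. apply Rmult_le_compat_l; lra. }
    replace (/ (24 * (INR k + / 2) ^ 2 * A ^ 2)) with (upb k / (A * A)) by (unfold upb; field; split; lra).
    auto.
Qed.

Lemma FF_int_le a : exp (- t) < a -> RInt (FF t) a (a + 1) <= FF t a.
Proof.
  intros ha.
  assert (RInt (fun _ => FF t a) a (a + 1) = FF t a).
  { rewrite RInt_const. change (scal (a + 1 - a) (FF t a)) with ((a + 1 - a) * FF t a). apply eqR. ring. }
  rewrite <- H. apply RInt_le. lra. apply exRInt_FF; lra. apply ex_RInt_const.
  intros x hx. apply FF_dec; lra.
Qed.

Lemma RIntFF_deriv a x : exp (- t) < a -> exp (- t) < x -> is_derive (fun z => RInt (FF t) a z) x (FF t x).
Proof.
  intros ha hx.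
  assert (hd : 0 < x - exp (- t)) by lra.
  apply (is_derive_RInt (FF t) (fun z => RInt (FF t) a z) a x).
  - exists (mkposreal _ hd). intros z hz. apply ball_R in hz. simpl in hz.
    apply (@RInt_correct R_CompleteNormedModule). apply exRInt_FF; lra.
  - apply cont_ctoC. apply FF_cont. auto.
Qed.

Lemma FF_mid_le a : exp (- t) < a -> FF t (a + /2) <= RInt (FF t) a (a + 1).
Proof.
  intros ha.
  pose proof (convex_mid (fun z => RInt (FF t) a z) (FF t) (FF1 t) (a + /2)) as hc.
  assert (e1 : a + /2 + /2 = a + 1) by field. assert (e2 : a + /2 - /2 = a) by field.
  rewrite e1, e2, RInt_point in hc. change zero with 0 in hc. rewrite Rminus_0_r in hc.
  apply hc.
  - intros x hx. assert (h : exp (- t) < x) by lra. split. apply RIntFF_deriv; auto.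
    apply d_FF. apply (dom_pos t x h). apply (dom_lam t x h).
  - intros x y hx hxy hy. apply FF1_inc; lra.
Qed.

Lemma phi1_step a : exp (- t) < a -> phi1 t (a + 1) - phi1 t a <= phi2 t a.
Proof.
  intros ha.
  pose proof (mvt_bounds (phi1 t) (phi2 t) a (a + 1) (phi2 t (a + 1)) (phi2 t a)) as hm.
  assert (phi2 t (a + 1) * (a + 1 - a) <= phi1 t (a + 1) - phi1 t a <= phi2 t a * (a + 1 - a)).
  { apply hm. lra. intros x hx. assert (h : exp (- t) < x) by lra. split.
    apply d_phi1. apply (dom_pos t x h). apply (dom_lam t x h).
    split; apply phi2_dec; lra. }
  lra.
Qed.

Lemma phi1_step' a : exp (- t) < a -> phi2 t (a + 1) <= phi1 t (a + 1) - phi1 t a.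
Proof.
  intros ha.
  pose proof (mvt_bounds (phi1 t) (phi2 t) a (a + 1) (phi2 t (a + 1)) (phi2 t a)) as hm.
  assert (phi2 t (a + 1) * (a + 1 - a) <= phi1 t (a + 1) - phi1 t a <= phi2 t a * (a + 1 - a)).
  { apply hm. lra. intros x hx. assert (h : exp (- t) < x) by lra. split.
    apply d_phi1. apply (dom_pos t x h). apply (dom_lam t x h).
    split; apply phi2_dec; lra. }
  lra.
Qed.

Lemma phi2_convex m : exp (- t) < m - /2 -> phi2 t m <= phi1 t (m + /2) - phi1 t (m - /2).
Proof.
  intros hm. apply convex_mid with (psi1 := phi3 t).
  - intros x hx. assert (h : exp (- t) < x) by lra. split.
    apply d_phi1. apply (dom_pos t x h). apply (dom_lam t x h).
    apply d_phi2. apply (dom_pos t x h). apply (dom_lam t x h).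
  - intros x y hx hxy hy. apply phi3_inc; lra.
Qed.
End F.

Section G.
Variable t : R.

Definition dl k := PP t (INR k + 1) - PP t (INR k) - / (H k - euler_gamma + t).

Fixpoint Sd n M := match M with O => 0 | S M' => Sd n M' + dl (n + M') end.

Lemma dl_bounds k : exp (- t) < INR k ->
  phi2 t (INR k + 1) / 24 + FF t (INR k + 1) <= dl k <= phi2 t (INR k) / 24 + FF t (INR k + /2).
Proof.
  intros hk. pose proof (mid_bounds t (INR k) hk). pose proof (second_bounds t k hk).
  unfold dl. lra.
Qed.

Lemma phi2_pos x : exp (- t) < x -> 0 < phi2 t x.
Proof. intros h. pose proof (dom_pos t x h). pose proof (dom_lam t x h). unfold phi2.
  apply Rdiv_lt_0_compat. lra. pos. Qed.

Lemma dl_pos k : exp (- t) < INR k -> 0 < dl k.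
Proof.
  intros hk. pose proof (dl_bounds k hk). pose proof (phi2_pos (INR k + 1) ltac:(lra)).
  pose proof (FF_pos t (INR k + 1) ltac:(lra)). lra.
Qed.

Lemma Sd_low n M : exp (- t) < INR n ->
  (phi1 t (INR n + INR M + 1) - phi1 t (INR n + 1)) / 24 + RInt (FF t) (INR n + 1) (INR n + INR M + 1) <= Sd n M.
Proof.
  intros hn. induction M as [|M IH].
  - simpl. rewrite Rplus_0_r, RInt_point. change zero with 0. lra.
  - simpl Sd. rewrite S_INR.
    pose proof (pos_INR M).
    assert (hk : exp (- t) < INR (n + M)) by (rewrite plus_INR; lra).
    pose proof (dl_bounds _ hk) as [hl _]. rewrite plus_INR in hl.
    pose proof (phi1_step t (INR n + INR M + 1) ltac:(lra)).
    pose proof (FF_int_le t (INR n + INR M + 1) ltac:(lra)).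
    rewrite <- (RInt_Chasles (FF t) (INR n + 1) (INR n + INR M + 1) (INR n + (INR M + 1) + 1)) by (apply exRInt_FF; lra).
    change (plus ?x ?y) with (x + y).
    replace (INR n + (INR M + 1) + 1) with (INR n + INR M + 1 + 1) by ring.
    lra.
Qed.

Lemma Sd_up_aux n M : exp (- t) < INR n ->
  Sd n (S M) <= phi2 t (INR n) / 24 + (phi1 t (INR n + INR M + /2) - phi1 t (INR n + /2)) / 24
     + RInt (FF t) (INR n) (INR n + INR M + 1).
Proof.
  intros hn. induction M as [|M IH].
  - simpl. rewrite Nat.add_0_r. pose proof (dl_bounds n hn) as [_ hu].
    pose proof (FF_mid_le t (INR n) hn). rewrite Rplus_0_r. lra.
  - change (Sd n (S (S M))) with (Sd n (S M) + dl (n + S M)).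
    rewrite S_INR. pose proof (pos_INR M).
    assert (hk : exp (- t) < INR (n + S M)) by (rewrite plus_INR, S_INR; lra).
    pose proof (dl_bounds _ hk) as [_ hu]. rewrite plus_INR, S_INR in hu.
    pose proof (phi2_convex t (INR n + (INR M + 1)) ltac:(lra)).
    pose proof (FF_mid_le t (INR n + (INR M + 1)) ltac:(lra)).
    rewrite <- (RInt_Chasles (FF t) (INR n) (INR n + INR M + 1) (INR n + (INR M + 1) + 1)) by (apply exRInt_FF; lra).
    change (plus ?x ?y) with (x + y).
    replace (INR n + (INR M + 1) - /2) with (INR n + INR M + /2) in H0 by field.
    replace (INR n + (INR M + 1) + /2) with (INR n + INR M + 1 + /2) in H0 by field.
    replace (INR n + (INR M + 1)) with (INR n + INR M + 1) in * by ring.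
    lra.
Qed.

Lemma phi1_fh x : exp (- t) < x -> - phi1 t x / 24 = fh t x.
Proof. intros h. pose proof (dom_pos t x h). pose proof (dom_lam t x h). unfold phi1, fh. field. split; lra. Qed.

Lemma phi1_neg x : exp (- t) < x -> phi1 t x < 0.
Proof. intros h. pose proof (phi1_fh x h). pose proof (fh_pos t x h). lra. Qed.

Lemma Sd_up n M : exp (- t) < INR n ->
  Sd n M <= phi2 t (INR n) / 24 + fh t (INR n + /2) + RInt (FF t) (INR n) (INR n + INR M).
Proof.
  intros hn. destruct M as [|M].
  - simpl. rewrite Rplus_0_r, RInt_point. change zero with 0.
    pose proof (phi2_pos _ hn). pose proof (fh_pos t (INR n + /2) ltac:(lra)). lra.
  - pose proof (Sd_up_aux n M hn). rewrite S_INR. pose proof (pos_INR M).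
    pose proof (phi1_neg (INR n + INR M + /2) ltac:(lra)).
    pose proof (phi1_fh (INR n + /2) ltac:(lra)).
    replace (INR n + (INR M + 1)) with (INR n + INR M + 1) by ring. lra.
Qed.
End G.

Lemma ceilZ_ge r : r <= IZR (ceilZ r).
Proof.
  unfold ceilZ. destruct (archimed (- r)) as [h1 h2]. rewrite minus_IZR. simpl. lra.
Qed.

Lemma ceilZ_nat N : ceilZ (INR N) = Z.of_nat N.
Proof.
  unfold ceilZ. rewrite INR_IZR_INZ.
  assert (up (- IZR (Z.of_nat N)) = (- Z.of_nat N + 1)%Z).
  { symmetry. apply tech_up; rewrite plus_IZR, opp_IZR; simpl; lra. }
  rewrite H. lia.
Qed.

Lemma sumZ_last g m M : sumZ g m (S M) = sumZ g m M + g (m + Z.of_nat M)%Z.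
Proof.
  revert m. induction M as [|M IH]; intros m.
  - simpl. rewrite Z.add_0_r. ring.
  - change (sumZ g m (S (S M))) with (g m + sumZ g (m + 1)%Z (S M)).
    rewrite IH. simpl sumZ. rewrite Nat2Z.inj_succ.
    replace (m + 1 + Z.of_nat M)%Z with (m + Z.succ (Z.of_nat M))%Z by lia. ring.
Qed.

Section H.
Variable t r : R.

Lemma beta_step N : (ceilZ r <= Z.of_nat N)%Z ->
  beta_x t r (INR (S N)) = beta_x t r (INR N) + dl t N.
Proof.
  intros hN. unfold beta_x, dl. rewrite !ceilZ_nat.
  replace (Z.to_nat (Z.of_nat (S N) - ceilZ r)) with (S (Z.to_nat (Z.of_nat N - ceilZ r))) by lia.
  rewrite sumZ_last.
  replace (ceilZ r + Z.of_nat (Z.to_nat (Z.of_nat N - ceilZ r)))%Z with (Z.of_nat N) by lia.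
  rewrite Nat2Z.id. rewrite S_INR. unfold PP. ring.
Qed.

Lemma beta_Sd n M : (ceilZ r <= Z.of_nat n)%Z ->
  beta_x t r (INR (n + M)) = beta_x t r (INR n) + Sd t n M.
Proof.
  intros hn. induction M as [|M IH].
  - rewrite Nat.add_0_r. simpl. ring.
  - replace (n + S M)%nat with (S (n + M)) by lia. rewrite beta_step by lia.
    rewrite IH. simpl Sd. ring.
Qed.
End H.

Lemma nat_large y : exists N, forall M, (N <= M)%nat -> y <= INR M.
Proof.
  destruct (archimed y) as [h1 _].
  exists (Z.to_nat (up y)). intros M hM. apply le_INR in hM.
  destruct (Z_le_gt_dec 0 (up y)).
  - rewrite INR_IZR_INZ, Z2Nat.id in hM by lia. lra.
  - pose proof (pos_INR M). assert (IZR (up y) < 0) by (apply IZR_lt; lia). lra.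
Qed.

Section I.
Variable t : R.

Lemma cv_phi1 a : exp (- t) < a -> Un_cv (fun M => phi1 t (a + INR M + 1)) 0.
Proof.
  intros ha. pose proof (dom_pos t a ha). pose proof (dom_lam t a ha).
  apply (cv_0_bound _ (/ (t + ln a)^2) 0). intros M _. pose proof (pos_INR M).
  assert (hx : exp (- t) < a + INR M + 1) by lra.
  pose proof (lam_mono t a (a + INR M + 1) ha ltac:(lra)).
  rewrite Rabs_left by (apply phi1_neg; auto). unfold phi1. rewrite Ropp_involutive.
  rewrite <- Rinv_mult. apply Rinv_le_contravar. pos.
  rewrite Rmult_comm. apply Rmult_le_compat. apply Rlt_le; pos. apply pow_le; lra. lra. apply pow_incr; lra.
Qed.

Lemma cv_RInt a : exp (- t) < a -> Un_cv (fun M => RInt (FF t) a (a + INR M)) (RInt_infty (FF t) a).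
Proof.
  intros ha. destruct (infty_limit t a ha) as [L [h1 [h2 h3]]]. rewrite h3.
  intros eps he. destruct (h2 eps he) as [M0 [hM0 hh]].
  destruct (nat_large (M0 - a)) as [N hN]. exists N. intros n hn.
  specialize (hN n hn). pose proof (pos_INR n).
  specialize (hh (a + INR n) ltac:(lra)). specialize (h1 (a + INR n) ltac:(lra)).
  unfold R_dist. rewrite Rabs_minus_sym, Rabs_pos_eq; lra.
Qed.

Lemma infty_le_fh a : exp (- t) < a -> RInt_infty (FF t) a <= fh t a.
Proof.
  intros ha. destruct (infty_limit t a ha) as [L [h1 [h2 h3]]]. rewrite h3.
  apply le_epsilon. intros eps he. destruct (h2 eps he) as [M [hM hh]].
  specialize (hh M ltac:(lra)). pose proof (I_up t a M ha hM). pose proof (fh_pos t M ltac:(lra)). lra.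
Qed.

Lemma infty_ge a : exp (- t) < a -> (t + ln a) / (t + ln a + 2) * fh t a <= RInt_infty (FF t) a.
Proof.
  intros ha. destruct (infty_limit t a ha) as [L [h1 [h2 h3]]]. rewrite h3.
  pose proof (dom_pos t a ha). pose proof (dom_lam t a ha).
  set (k := (t + ln a) / (t + ln a + 2)).
  assert (hk : 0 <= k <= 1).
  { unfold k. split. apply Rlt_le, Rdiv_lt_0_compat; lra.
    apply (Rmult_le_reg_r (t + ln a + 2)). lra. unfold Rdiv. rewrite Rmult_assoc, Rinv_l by lra. lra. }
  apply le_epsilon. intros eps he.
  set (y := a + / (24 * eps * (t + ln a)^2)).
  assert (hy : a <= y) by (unfold y; assert (0 < / (24 * eps * (t + ln a)^2)) by pos; lra).
  pose proof (I_low t a y ha hy). pose proof (h1 y hy).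
  pose proof (fh_small t a y ha hy).
  assert (/ (24 * y * (t + ln a)^2) <= eps).
  { unfold y. rewrite <- (Rinv_inv eps) at 2. apply Rinv_le_contravar. pos.
    assert (0 < / (24 * eps * (t + ln a)^2)) by pos.
    replace (/ eps) with (24 * (/ (24 * eps * (t + ln a)^2)) * (t + ln a)^2) by (field; lra).
    apply Rmult_le_compat_r. apply Rlt_le; pos. apply Rmult_le_compat_l; lra. }
  pose proof (fh_pos t y ltac:(lra)).
  assert (k * fh t y <= eps) by nra.
  assert (k * (fh t a - fh t y) <= L) by (unfold k; lra).
  lra.
Qed.

Variable r : R.
Hypothesis hr : r > exp (- t).

Lemma cv_const (c : R) : Un_cv (fun _ => c) c.
Proof. intros e he. exists 0%nat. intros. unfold R_dist. rewrite Rminus_eq_0, Rabs_R0. lra. Qed.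

Lemma n_dom n : (ceilZ r <= Z.of_nat n)%Z -> exp (- t) < INR n.
Proof.
  intros h. pose proof (ceilZ_ge r). apply IZR_le in h. rewrite <- INR_IZR_INZ in h. lra.
Qed.

Lemma main_bounds n : (ceilZ r <= Z.of_nat n)%Z ->
  fh t (INR n + 1) + RInt_infty (FF t) (INR n + 1) <= beta t r - beta_x t r (INR n) /\
  beta t r - beta_x t r (INR n) <= RInt_infty (FF t) (INR n) + fh t (INR n + /2) + phi2 t (INR n) / 24.
Proof.
  intros hc. pose proof (n_dom n hc) as hn.
  set (U := phi2 t (INR n) / 24 + fh t (INR n + /2) + RInt_infty (FF t) (INR n)).
  destruct (infty_limit t (INR n) hn) as [Ln [i1 [i2 i3]]].
  assert (hgr : Un_growing (Sd t n)).
  { intros M. simpl. pose proof (dl_pos t (n + M) ltac:(rewrite plus_INR; pose proof (pos_INR M); lra)). lra. }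
  assert (hbd : forall M, Sd t n M <= U).
  { intros M. pose proof (Sd_up t n M hn). pose proof (pos_INR M).
    pose proof (i1 (INR n + INR M) ltac:(lra)). unfold U. rewrite i3. lra. }
  assert (hub : has_ub (Sd t n)).
  { exists U. intros x [i ->]. apply hbd. }
  destruct (growing_cv (Sd t n) hgr hub) as [S hS].
  assert (hb : beta t r = beta_x t r (INR n) + S).
  { unfold beta. apply lim_seq_eq.
    intros eps he. destruct (hS eps he) as [M0 hM0]. exists (n + M0)%nat. intros N hN.
    replace N with (n + (N - n))%nat by lia. rewrite beta_Sd by auto.
    unfold R_dist. replace (beta_x t r (INR n) + Sd t n (N - n) - (beta_x t r (INR n) + S)) with (Sd t n (N - n) - S) by ring.
    apply hM0. lia. }
  rewrite hb. replace (beta_x t r (INR n) + S - beta_x t r (INR n)) with S by ring.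
  split.
  - apply (Rle_cv_lim (Un := fun M => (phi1 t (INR n + INR M + 1) - phi1 t (INR n + 1)) / 24 + RInt (FF t) (INR n + 1) (INR n + INR M + 1)) (Vn := Sd t n)).
    + intros M. apply Sd_low. auto.
    + replace (fh t (INR n + 1) + RInt_infty (FF t) (INR n + 1)) with ((0 - phi1 t (INR n + 1)) / 24 + RInt_infty (FF t) (INR n + 1)).
      2: { rewrite <- phi1_fh by lra. field. }
      apply CV_plus.
      * assert (h := CV_mult _ _ _ _ (CV_minus _ _ _ _ (cv_phi1 (INR n) hn) (cv_const (phi1 t (INR n + 1)))) (cv_const (/ 24))).
        exact h.
      * pose proof (cv_RInt (INR n + 1) ltac:(lra)) as h.
        intros e he. destruct (h e he) as [N hN]. exists N. intros m hm.
        replace (INR n + INR m + 1) with (INR n + 1 + INR m) by ring. apply hN; auto.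
    + auto.
  - apply (Rle_cv_lim (Un := Sd t n) (Vn := fun _ => U)). auto. auto.
    replace (RInt_infty (FF t) (INR n) + fh t (INR n + / 2) + phi2 t (INR n) / 24) with U by (unfold U; ring).
    apply cv_const.
Qed.
End I.

Lemma cv_ev_eq (u v : nat -> R) l N : (forall n, (N <= n)%nat -> u n = v n) -> Un_cv v l -> Un_cv u l.
Proof.
  intros he hv. apply (Un_cv_close u v (fun _ => 0) l N); auto.
  intros n hn. rewrite he by auto. rewrite Rminus_eq_0, Rabs_R0. lra.
  apply cv_const.
Qed.

Lemma squeeze (a u b : nat -> R) l N : (forall n, (N <= n)%nat -> a n <= u n <= b n) ->
  Un_cv a l -> Un_cv b l -> Un_cv u l.
Proof.
  intros h ha hb eps he. destruct (ha eps he) as [N1 h1]. destruct (hb eps he) as [N2 h2].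
  exists (max N (max N1 N2)). intros n hn. specialize (h n ltac:(lia)).
  specialize (h1 n ltac:(lia)). specialize (h2 n ltac:(lia)). unfold R_dist in *.
  apply Rabs_def2 in h1. apply Rabs_def2 in h2. apply Rabs_def1; lra.
Qed.

Lemma inv_ln_cv s a : 0 <= a -> Un_cv (fun n => / (s + ln (INR n + a))) 0.
Proof.
  intros ha eps he.
  destruct (nat_large (exp (/ eps - s) + 1)) as [N hN]. exists N. intros n hn.
  specialize (hN n hn). pose proof (exp_pos (/ eps - s)).
  assert (ln (exp (/ eps - s)) < ln (INR n + a)) by (apply ln_increasing; lra).
  rewrite ln_exp in H0.
  assert (0 < / eps) by pos.
  unfold R_dist. rewrite Rminus_0_r. rewrite Rabs_pos_eq by (apply Rlt_le; pos).
  rewrite <- (Rinv_inv eps). apply Rinv_lt_contravar. pos. lra.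
Qed.

Section J.
Variable t : R.

Lemma ev_pos : exists N, forall n, (N <= n)%nat -> 2 <= INR n /\ exp (- t) < INR n.
Proof.
  destruct (nat_large (Rmax 2 (exp (- t) + 1))) as [N hN]. exists N. intros n hn.
  specialize (hN n hn). pose proof (Rmax_l 2 (exp (- t) + 1)). pose proof (Rmax_r 2 (exp (- t) + 1)). lra.
Qed.

Lemma q_cv a : 0 <= a <= 1 -> Un_cv (fun n => ln (INR n) / (t + ln (INR n + a))) 1.
Proof.
  intros ha. destruct ev_pos as [N hN].
  apply (Un_cv_close _ (fun _ => 1) (fun n => (Rabs t + 1) * / (t + ln (INR n + a))) 1 N).
  - intros n hn. destruct (hN n hn) as [h2 hd].
    assert (hd' : exp (- t) < INR n + a) by lra.
    pose proof (dom_lam t _ hd'). pose proof (dom_lam t _ hd).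
    assert (hl : 0 <= ln (INR n + a) - ln (INR n) <= 1).
    { rewrite <- ln_div by lra. split.
      - rewrite <- ln_1. apply ln_mono. lra. apply (Rmult_le_reg_r (INR n)). lra. unfold Rdiv.
        rewrite Rmult_assoc, Rinv_l by lra. lra.
      - pose proof (ln_le_sub1 ((INR n + a) / INR n) ltac:(apply Rdiv_lt_0_compat; lra)).
        assert ((INR n + a) / INR n - 1 = a / INR n) by (field; lra).
        assert (a / INR n <= 1). { apply (Rmult_le_reg_r (INR n)). lra. unfold Rdiv.
          rewrite Rmult_assoc, Rinv_l by lra. lra. }
        lra. }
    replace (ln (INR n) / (t + ln (INR n + a)) - 1) with (- (t + (ln (INR n + a) - ln (INR n))) * / (t + ln (INR n + a))) by (field; lra).
    rewrite Rabs_mult, (Rabs_pos_eq (/ _)) by (apply Rlt_le; pos).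
    apply Rmult_le_compat_r. apply Rlt_le; pos.
    rewrite Rabs_Ropp. pose proof (Rabs_triang t (ln (INR n + a) - ln (INR n))).
    rewrite (Rabs_pos_eq (ln (INR n + a) - ln (INR n))) in H1 by lra. lra.
  - apply cv_const.
  - replace 0 with ((Rabs t + 1) * 0) by ring. apply CV_mult. apply cv_const. apply inv_ln_cv. lra.
Qed.

Lemma rat_cv a : 0 <= a -> Un_cv (fun n => INR n / (INR n + a)) 1.
Proof.
  intros ha.
  apply (Un_cv_close _ (fun _ => 1) (fun n => (2 * a) * / (INR n + 1)) 1 1).
  - intros n hn. apply le_INR in hn. simpl in hn.
    replace (INR n / (INR n + a) - 1) with (- (a / (INR n + a))) by (field; lra).
    rewrite Rabs_Ropp. rewrite Rabs_pos_eq by (apply Rmult_le_pos; [lra| apply Rlt_le; pos]).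
    assert (/ (INR n + a) <= 2 * / (INR n + 1)).
    { apply (Rle_trans _ (/ INR n)). apply Rinv_le_contravar; lra.
      replace (2 * / (INR n + 1)) with (/ ((INR n + 1) / 2)) by (field; lra).
      apply Rinv_le_contravar; lra. }
    unfold Rdiv. replace (2 * a * / (INR n + 1)) with (a * (2 * / (INR n + 1))) by ring.
    apply Rmult_le_compat_l; lra.
  - apply cv_const.
  - replace 0 with (2 * a * 0) by ring. apply CV_mult. apply cv_const. apply cv_inv_n1.
Qed.

Definition ww n := 12 * INR n * (ln (INR n))^2.

Lemma w_fh_cv a : 0 <= a <= 1 -> Un_cv (fun n => ww n * fh t (INR n + a)) (/2).
Proof.
  intros ha. destruct ev_pos as [N hN].
  apply (cv_ev_eq _ (fun n => / 2 * (INR n / (INR n + a)) * ((ln (INR n) / (t + ln (INR n + a))) * (ln (INR n) / (t + ln (INR n + a))))) _ N).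
  - intros n hn. destruct (hN n hn) as [h2 hd].
    assert (hd' : exp (- t) < INR n + a) by lra. pose proof (dom_lam t _ hd').
    unfold ww, fh. field. split; lra.
  - replace (/2) with (/2 * 1 * (1 * 1)) at 1 by ring.
    apply CV_mult. apply CV_mult. apply cv_const. apply rat_cv; lra. apply CV_mult; apply q_cv; auto.
Qed.

Lemma w_phi2_cv : Un_cv (fun n => ww n * (phi2 t (INR n) / 24)) 0.
Proof.
  destruct ev_pos as [N hN].
  apply (cv_ev_eq _ (fun n => / 2 * ((ln (INR n) / (t + ln (INR n + 0))) * (ln (INR n) / (t + ln (INR n + 0)))) * (/ (INR n) * (1 + 2 * / (t + ln (INR n + 0))))) _ N).
  - intros n hn. destruct (hN n hn) as [h2 hd]. pose proof (dom_lam t _ hd).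
    rewrite Rplus_0_r. unfold ww, phi2. field. split; lra.
  - replace 0 with (/2 * (1 * 1) * (0 * (1 + 2 * 0))) by ring.
    apply CV_mult. apply CV_mult. apply cv_const. apply CV_mult; apply q_cv; lra.
    apply CV_mult.
    + apply (Un_cv_close _ (fun n => / (INR n + 1)) (fun n => / (INR n + 1)) 0 1).
      * intros n hn. apply le_INR in hn. simpl in hn.
        rewrite Rabs_pos_eq. 2:{ assert (/ (INR n + 1) <= / INR n) by (apply Rinv_le_contravar; lra).
          assert (0 < / INR n) by pos. lra. }
        assert (/ (INR n + 1) <= / INR n) by (apply Rinv_le_contravar; lra). apply Rinv_le_contravar in H; try pos.
        assert (0 < / (INR n + 1)) by pos. pose proof (Rinv_le_contravar (INR n) (INR n + 1)). pose proof (pos_INR n).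
        assert (/ INR n - / (INR n + 1) = / (INR n * (INR n + 1))) by (field; lra).
        assert (/ (INR n * (INR n + 1)) <= / (INR n + 1)).
        { apply Rinv_le_contravar. pos. nra. }
        lra.
      * apply cv_inv_n1.
      * apply cv_inv_n1.
    + apply CV_plus. apply cv_const. apply CV_mult. apply cv_const. apply inv_ln_cv. lra.
Qed.

Lemma kappa_cv : Un_cv (fun n => (t + ln (INR n + 1)) / (t + ln (INR n + 1) + 2)) 1.
Proof.
  destruct ev_pos as [N hN].
  apply (cv_ev_eq _ (fun n => 1 - 2 * / ((t + 2) + ln (INR n + 1))) _ N).
  - intros n hn. destruct (hN n hn) as [h2 hd].
    assert (hd' : exp (- t) < INR n + 1) by lra. pose proof (dom_lam t _ hd').
    field. lra.
  - replace 1 with (1 - 2 * 0) at 1 by ring. apply CV_minus. apply cv_const. apply CV_mult. apply cv_const.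
    apply inv_ln_cv. lra.
Qed.
End J.

Theorem corollary3p10 (t r : R) (hr : r > exp (- t)) :
  (forall n : nat, (ceilZ r <= Z.of_nat n)%Z ->
     RInt_infty (fun x => / (24 * x ^ 2 * (t + ln x) ^ 2)) (INR n + 1)
       + / (24 * (INR n + 1) * (t + ln (INR n + 1)) ^ 2)
     <= beta t r - beta_x t r (INR n)
     /\
     beta t r - beta_x t r (INR n)
     <= RInt_infty (fun x => / (24 * x ^ 2 * (t + ln x) ^ 2)) (INR n)
        + / (24 * (INR n + / 2) * (t + ln (INR n + / 2)) ^ 2)
        + / (24 * (INR n) ^ 2 * (t + ln (INR n)) ^ 2)
        + / (12 * (INR n) ^ 2 * (t + ln (INR n)) ^ 3))
  /\
  Un_cv (fun n => (beta t r - beta_x t r (INR n)) * (12 * INR n * (ln (INR n)) ^ 2)) 1.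
Proof.
  change (fun x => / (24 * x ^ 2 * (t + ln x) ^ 2)) with (FF t).
  split.
  - intros n hc. pose proof (n_dom t r hr n hc) as hn.
    pose proof (dom_pos t _ hn). pose proof (dom_lam t _ hn).
    destruct (main_bounds t r hr n hc) as [h1 h2].
    change (/ (24 * (INR n + 1) * (t + ln (INR n + 1)) ^ 2)) with (fh t (INR n + 1)).
    change (/ (24 * (INR n + / 2) * (t + ln (INR n + / 2)) ^ 2)) with (fh t (INR n + /2)).
    assert (phi2 t (INR n) / 24 = / (24 * (INR n) ^ 2 * (t + ln (INR n)) ^ 2) + / (12 * (INR n) ^ 2 * (t + ln (INR n)) ^ 3)).
    { unfold phi2. field. split; lra. }
    split; lra.
  - destruct (ev_pos t) as [N1 hN1].
    set (N := max N1 (Z.to_nat (ceilZ r))).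
    apply (squeeze
      (fun n => ww n * fh t (INR n + 1) + (t + ln (INR n + 1)) / (t + ln (INR n + 1) + 2) * (ww n * fh t (INR n + 1)))
      _
      (fun n => ww n * fh t (INR n + 0) + ww n * fh t (INR n + /2) + ww n * (phi2 t (INR n) / 24)) 1 N).
    + intros n hn. destruct (hN1 n ltac:(lia)) as [h2 hd].
      assert (hc : (ceilZ r <= Z.of_nat n)%Z).
      { pose proof (ceilZ_ge r). pose proof (exp_pos (- t)).
        assert (0 < IZR (ceilZ r)) by lra. apply lt_0_IZR in H1. lia. }
      destruct (main_bounds t r hr n hc) as [b1 b2].
      pose proof (infty_le_fh t (INR n) hd).
      pose proof (infty_ge t (INR n + 1) ltac:(lra)).
      assert (hw : 0 <= ww n) by (unfold ww; pose proof (pos_INR n); apply Rmult_le_pos; [lra| apply pow2_ge_0]).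
      rewrite Rplus_0_r. fold (ww n).
      split.
      * replace (ww n * fh t (INR n + 1) + (t + ln (INR n + 1)) / (t + ln (INR n + 1) + 2) * (ww n * fh t (INR n + 1)))
          with ((fh t (INR n + 1) + (t + ln (INR n + 1)) / (t + ln (INR n + 1) + 2) * fh t (INR n + 1)) * ww n) by ring.
        rewrite (Rmult_comm (beta t r - _)). rewrite (Rmult_comm _ (ww n)).
        apply Rmult_le_compat_l. auto. lra.
      * rewrite (Rmult_comm (beta t r - _)).
        replace (ww n * fh t (INR n) + ww n * fh t (INR n + / 2) + ww n * (phi2 t (INR n) / 24))
          with (ww n * (fh t (INR n) + fh t (INR n + / 2) + phi2 t (INR n) / 24)) by ring.
        apply Rmult_le_compat_l. auto. lra.
    + assert (h := CV_plus _ _ _ _ (w_fh_cv t 1 ltac:(lra)) (CV_mult _ _ _ _ (kappa_cv t) (w_fh_cv t 1 ltac:(lra)))).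
      replace (/2 + 1 * /2) with 1 in h by field. exact h.
    + assert (h := CV_plus _ _ _ _ (CV_plus _ _ _ _ (w_fh_cv t 0 ltac:(lra)) (w_fh_cv t (/2) ltac:(lra))) (w_phi2_cv t)).
      replace (/2 + /2 + 0) with 1 in h by field. exact h.
Qed.
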